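(* Assume Assumption A. Let $(\sigma_i)_{i\in\mathbb{N}}$ be i.i.d. copies of $\sigma_0$. Fix $k\in\mathbb{N}$ and let $(\ell_i)$, $(\delta_i)$ be positive sequences with $\ell_i\to\infty$. Then there exists $c>0$ such that, for all sufficiently large $i$, \[ \mathbf{P}\big(S_i^{(k)}>\ell_i\delta_i\,\big|\,\sigma_1,\dots,\sigma_i\le\ell_i\big)<c\,\delta_i^{-1}\Big(\frac{i}{L(\ell_i)}g(\ell_i)\Big)^k. \]
   Context: $\sigma_0$ is a strictly positive random variable under $\mathbf{P}$ and $L(u):=1/\mathbf{P}(\sigma_0>u)$ satisfies $\lim_{u\to\infty}L(uv)/L(u)=1$ for all $v>0$. For an index $i$, let $\sigma_i^{(1)}\ge\dots\ge\sigma_i^{(i)}$ be the descending order statistics of $(\sigma_j)_{1\le j\le i}$, and $S_i^{(k)}:=\sum_{j=k}^{i}\sigma_i^{(j)}$. Assumption A: $L$ is continuous, and there exist functions $g,k$ with $g(u)\to0$ as $u\to\infty$, $g$ eventually monotone decreasing, such that $\lim_{u\to\infty}\big(L(uv)/L(u)-1\big)/g(u)=k(v)$ for every $v>0$, where there exists $v$ with $k(v)\neq0$ and $k(uv)\ne k(u)$ for all $u>0$. *)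

(* Defs.v *)
From Stdlib Require Import Reals Lra List.
Open Scope R_scope.

Record ProbSpace := {
  Omega : Type;
  meas : (Omega -> Prop) -> Prop;
  Pr : (Omega -> Prop) -> R;
  meas_full : meas (fun _ => True);
  meas_compl : forall A, meas A -> meas (fun w => ~ A w);
  meas_union : forall A : nat -> (Omega -> Prop),
      (forall n, meas (A n)) -> meas (fun w => exists n, A n w);
  Pr_ext : forall A B : Omega -> Prop, (forall w, A w <-> B w) -> Pr A = Pr B;
  Pr_nonneg : forall A, meas A -> 0 <= Pr A;
  Pr_full : Pr (fun _ => True) = 1;
  Pr_countably_additive : forall A : nat -> (Omega -> Prop),
      (forall n, meas (A n)) ->
      (forall n m w, n <> m -> A n w -> A m w -> False) ->
      infinite_sum (fun n => Pr (A n)) (Pr (fun w => exists n, A n w))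
}.

Definition random_variable (Ps : ProbSpace) (X : Omega Ps -> R) : Prop :=
  forall x, meas Ps (fun w => X w <= x).

Definition iid (Ps : ProbSpace) (sigma : nat -> Omega Ps -> R) : Prop :=
  (forall j, random_variable Ps (sigma j)) /\
  (forall j x, Pr Ps (fun w => sigma j w <= x) = Pr Ps (fun w => sigma 0%nat w <= x)) /\
  (forall (js : list nat) (xs : nat -> R), NoDup js ->
     Pr Ps (fun w => Forall (fun j => sigma j w <= xs j) js)
     = fold_right Rmult 1 (map (fun j => Pr Ps (fun w => sigma j w <= xs j)) js)).

Definition Ltail (Ps : ProbSpace) (X : Omega Ps -> R) (u : R) : R :=
  / Pr Ps (fun w => X w > u).

Definition lim_infty (f : R -> R) (l : R) : Prop :=
  forall eps, 0 < eps -> exists M, forall u, M <= u -> Rabs (f u - l) < eps.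

Definition seq_to_infty (a : nat -> R) : Prop :=
  forall M, exists N, forall i, (N <= i)%nat -> M <= a i.

Fixpoint ins_desc (x : R) (l : list R) : list R :=
  match l with
  | nil => x :: nil
  | y :: l' => if Rle_dec y x then x :: y :: l' else y :: ins_desc x l'
  end.

Fixpoint sort_desc (l : list R) : list R :=
  match l with
  | nil => nil
  | x :: l' => ins_desc x (sort_desc l')
  end.

(** S_i^{(k)} = sum_{j=k}^{i} sigma_i^{(j)}, where
    sigma_i^{(1)} >= ... >= sigma_i^{(i)} are the descending order
    statistics of sigma_1, ..., sigma_i (k >= 1). *)
Definition S_ord {Om : Type} (sigma : nat -> Om -> R) (i k : nat) (w : Om) : R :=
  fold_right Rplus 0
    (skipn (k - 1) (sort_desc (map (fun j => sigma j w) (seq 1 i)))).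

Definition AssumptionA (L g kf : R -> R) : Prop :=
  continuity L /\
  lim_infty g 0 /\
  (exists M, forall u v, M <= u -> u <= v -> g v <= g u) /\
  (forall v, 0 < v -> lim_infty (fun u => (L (u * v) / L u - 1) / g u) (kf v)) /\
  (exists v, 0 < v /\ kf v <> 0 /\ forall u, 0 < u -> kf (u * v) <> kf u).

(* Main.v *)
Require Import Defs.
From Stdlib Require Import Reals Lra List Lia Classical FunctionalExtensionality PropExtensionality ZArith Permutation Factorial.
Open Scope R_scope.

Lemma meas_ext (Ps : ProbSpace) (A B : Omega Ps -> Prop) :
  (forall w, A w <-> B w) -> meas Ps A -> meas Ps B.
Proof.
  intros H HA. replace B with A; auto.
  apply functional_extensionality; intro w; apply propositional_extensionality; auto.
Qed.

Lemma meas_empty (Ps : ProbSpace) : meas Ps (fun _ => False).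
Proof.
  eapply meas_ext; [|apply meas_compl, meas_full]. intro w; tauto.
Qed.

Lemma meas_or (Ps : ProbSpace) A B : meas Ps A -> meas Ps B -> meas Ps (fun w => A w \/ B w).
Proof.
  intros HA HB.
  eapply meas_ext; [|apply (meas_union Ps (fun n => match n with O => A | _ => B end))].
  - intro w; split.
    + intros [n Hn]; destruct n; auto.
    + intros [H|H]; [exists O; auto | exists 1%nat; auto].
  - intro n; destruct n; auto.
Qed.

Lemma meas_not (Ps : ProbSpace) A : meas Ps A -> meas Ps (fun w => ~ A w).
Proof. apply meas_compl. Qed.

Lemma meas_and (Ps : ProbSpace) A B : meas Ps A -> meas Ps B -> meas Ps (fun w => A w /\ B w).
Proof.
  intros HA HB.
  eapply meas_ext; [|apply meas_not, (meas_or Ps _ _ (meas_not Ps _ HA) (meas_not Ps _ HB))].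
  intro w; split; [tauto|]. intro H. destruct (classic (A w)); destruct (classic (B w)); tauto.
Qed.

Lemma meas_True (Ps : ProbSpace) : meas Ps (fun _ => True).
Proof. apply meas_full. Qed.

Lemma Pr_empty (Ps : ProbSpace) : Pr Ps (fun _ => False) = 0.
Proof.
  pose proof (Pr_countably_additive Ps (fun _ => fun _ => False)) as H.
  assert (H1 : forall n : nat, meas Ps (fun _ => False)) by (intro; apply meas_empty).
  specialize (H H1). assert (H2 : forall (n m : nat) (w : Omega Ps), n <> m -> False -> False -> False) by auto.
  specialize (H H2).
  cbv beta in H.
  rewrite (Pr_ext Ps (fun w => exists n : nat, False) (fun _ => False)) in H by (intro; split; [intros [_ x]; auto| tauto]).
  set (p := Pr Ps (fun _ => False)) in *.
  assert (Hs : forall n, sum_f_R0 (fun _ => p) n = INR (S n) * p).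
  { induction n; simpl sum_f_R0. simpl; ring. rewrite IHn. rewrite !S_INR. ring. }
  destruct (Req_dec p 0) as [E|E]; auto. exfalso.
  destruct (H (Rabs p / 2)) as [N HN]. { apply Rdiv_lt_0_compat; [apply Rabs_pos_lt; auto| lra]. }
  pose proof (HN (S N) (le_S _ _ (le_n N))) as H3. pose proof (HN N (le_n N)) as H4.
  unfold Rdist in *. rewrite Hs in H3, H4.
  assert (Rabs (INR (S (S N)) * p - p - (INR (S N) * p - p)) < Rabs p).
  { eapply Rle_lt_trans. 2: { assert (Rabs (INR (S (S N)) * p - p) + Rabs (INR (S N) * p - p) < Rabs p) by lra. exact H0. }
    replace (INR (S (S N)) * p - p - (INR (S N) * p - p)) with ((INR (S (S N)) * p - p) + - (INR (S N) * p - p)) by ring.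
    rewrite <- (Rabs_Ropp (INR (S N) * p - p)). apply Rabs_triang. }
  replace (INR (S (S N)) * p - p - (INR (S N) * p - p)) with p in H0 by (rewrite (S_INR (S N)); ring). lra.
Qed.

Lemma Pr_add (Ps : ProbSpace) A B : meas Ps A -> meas Ps B -> (forall w, A w -> B w -> False) ->
  Pr Ps (fun w => A w \/ B w) = Pr Ps A + Pr Ps B.
Proof.
  intros HA HB Hd.
  set (Sq := fun n : nat => match n with O => A | 1%nat => B | _ => fun _ => False end).
  pose proof (Pr_countably_additive Ps Sq) as H.
  assert (H1 : forall n, meas Ps (Sq n)) by (intro n; destruct n as [|[|n]]; simpl; auto using meas_empty).
  assert (H2 : forall n m w, n <> m -> Sq n w -> Sq m w -> False).
  { intros [|[|n]] [|[|m]] w Hnm; simpl; try tauto; intros; eauto; lia. }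
  specialize (H H1 H2).
  rewrite (Pr_ext Ps (fun w => exists n, Sq n w) (fun w => A w \/ B w)) in H.
  2:{ intro w; split. intros [[|[|n]] Hn]; simpl in Hn; tauto. intros [H0|H0]; [exists O|exists 1%nat]; auto. }
  assert (Hs : forall n, sum_f_R0 (fun n => Pr Ps (Sq n)) (S n) = Pr Ps A + Pr Ps B).
  { induction n. simpl. ring. rewrite tech5, IHn. simpl Sq. rewrite Pr_empty. ring. }
  apply Rminus_diag_uniq. destruct (Req_dec (Pr Ps (fun w => A w \/ B w) - (Pr Ps A + Pr Ps B)) 0); auto.
  exfalso. destruct (H (Rabs (Pr Ps (fun w => A w \/ B w) - (Pr Ps A + Pr Ps B)))) as [N HN].
  apply Rabs_pos_lt; auto.
  specialize (HN (S N) (le_S _ _ (le_n N))). rewrite Hs in HN. unfold Rdist in HN.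
  rewrite <- Rabs_Ropp in HN. replace (- (Pr Ps A + Pr Ps B - Pr Ps (fun w => A w \/ B w))) with (Pr Ps (fun w => A w \/ B w) - (Pr Ps A + Pr Ps B)) in HN by ring. lra.
Qed.

Lemma Pr_mono (Ps : ProbSpace) A B : meas Ps A -> meas Ps B -> (forall w, A w -> B w) -> Pr Ps A <= Pr Ps B.
Proof.
  intros HA HB Hs.
  rewrite (Pr_ext Ps B (fun w => A w \/ (B w /\ ~ A w))).
  2:{ intro w; split. intro H; destruct (classic (A w)); tauto. intros [H|H]; auto; tauto. }
  rewrite Pr_add; auto. pose proof (Pr_nonneg Ps (fun w => B w /\ ~ A w) (meas_and Ps _ _ HB (meas_not Ps _ HA))). lra.
  apply meas_and; auto. apply meas_not; auto. intros w H1 [_ H2]; auto.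
Qed.

Lemma Pr_le1 (Ps : ProbSpace) A : meas Ps A -> Pr Ps A <= 1.
Proof. intros. rewrite <- (Pr_full Ps). apply Pr_mono; auto using meas_full. Qed.

Lemma Pr_compl (Ps : ProbSpace) A : meas Ps A -> Pr Ps (fun w => ~ A w) = 1 - Pr Ps A.
Proof.
  intros HA. rewrite <- (Pr_full Ps).
  rewrite (Pr_ext Ps (fun _ => True) (fun w => A w \/ ~ A w)) by (intro w; split; [intros; apply classic| auto]).
  rewrite Pr_add; auto. ring. apply meas_not; auto.
Qed.

Lemma Pr_sub (Ps : ProbSpace) A B : meas Ps A -> meas Ps B -> Pr Ps (fun w => A w \/ B w) <= Pr Ps A + Pr Ps B.
Proof.
  intros HA HB.
  rewrite (Pr_ext Ps (fun w => A w \/ B w) (fun w => A w \/ (B w /\ ~ A w))).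
  2:{ intro w; split. intros [H|H]; auto. destruct (classic (A w)); tauto. intros [H|[H _]]; auto. }
  rewrite Pr_add; auto. apply Rplus_le_compat_l. apply Pr_mono; auto. apply meas_and; auto using meas_not.
  intros w [H _]; auto. apply meas_and; auto using meas_not. intros w H [_ H']; auto.
Qed.

Lemma Pr_nonneg' (Ps : ProbSpace) A : meas Ps A -> 0 <= Pr Ps A.
Proof. apply Pr_nonneg. Qed.

Definition mf (Ps : ProbSpace) (X : Omega Ps -> R) := forall x, meas Ps (fun w => X w <= x).

Lemma mf_gt Ps X x : mf Ps X -> meas Ps (fun w => X w > x).
Proof. intros H. eapply meas_ext; [|apply meas_not, (H x)]. intro w; lra. Qed.

Lemma mf_lt Ps X x : mf Ps X -> meas Ps (fun w => X w < x).
Proof.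
  intros H. eapply meas_ext; [|apply (meas_union Ps (fun n => fun w => X w <= x - / INR (S n)))].
  - intro w; split.
    + intros [n Hn]. assert (0 < / INR (S n)) by (apply Rinv_0_lt_compat, lt_0_INR; lia). lra.
    + intros Hx. destruct (INR_unbounded (/ (x - X w))) as [n Hn].
      exists n. assert (0 < x - X w) by lra.
      assert (/ INR (S n) < x - X w).
      { rewrite <- (Rinv_inv (x - X w)). apply Rinv_lt_contravar.
        apply Rmult_lt_0_compat. apply Rinv_0_lt_compat; lra. apply lt_0_INR; lia.
        rewrite S_INR; lra. }
      lra.
  - intro n; apply H.
Qed.

Lemma mf_ge Ps X x : mf Ps X -> meas Ps (fun w => X w >= x).
Proof. intros H. eapply meas_ext; [|apply meas_not, (mf_lt Ps X x H)]. intro w; lra. Qed.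

Lemma mf_const Ps c : mf Ps (fun _ => c).
Proof.
  intros x. destruct (Rle_dec c x).
  eapply meas_ext; [|apply meas_full]. intro; split; auto.
  eapply meas_ext; [|apply meas_empty]. intro; split; [lra|tauto].
Qed.

Lemma mf_max Ps X Y : mf Ps X -> mf Ps Y -> mf Ps (fun w => Rmax (X w) (Y w)).
Proof.
  intros HX HY x. eapply meas_ext; [|apply (meas_and Ps _ _ (HX x) (HY x))].
  intro w; split. intros [H1 H2]; apply Rmax_lub; auto.
  intros H; split; eapply Rle_trans; [apply Rmax_l| exact H | apply Rmax_r | exact H].
Qed.

Lemma mf_min Ps X Y : mf Ps X -> mf Ps Y -> mf Ps (fun w => Rmin (X w) (Y w)).
Proof.
  intros HX HY x. eapply meas_ext; [|apply (meas_or Ps _ _ (HX x) (HY x))].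
  intro w; split. intros [H|H]; eapply Rle_trans; [apply Rmin_l|exact H|apply Rmin_r|exact H].
  unfold Rmin; destruct (Rle_dec (X w) (Y w)); auto.
Qed.

Definition qgrid (n a : nat) : R := INR a / INR (S n) - INR n.

Lemma mf_plus Ps X Y : mf Ps X -> mf Ps Y -> mf Ps (fun w => X w + Y w).
Proof.
  intros HX HY t.
  assert (Hm : meas Ps (fun w => exists n, exists a, X w >= qgrid n a /\ Y w > t - qgrid n a)).
  { apply (meas_union Ps (fun n => fun w => exists a, X w >= qgrid n a /\ Y w > t - qgrid n a)).
    intro n. apply (meas_union Ps (fun a => fun w => X w >= qgrid n a /\ Y w > t - qgrid n a)).
    intro a. apply meas_and. apply mf_ge; auto. apply mf_gt; auto. }
  eapply meas_ext; [|apply meas_not, Hm].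
  intro w; split.
  - intros Hn. apply Rnot_lt_le. intro Hlt. apply Hn. clear Hn.
    set (d := X w + Y w - t).
    destruct (INR_unbounded (Rmax (/ d) (- X w))) as [n Hn1].
    assert (Hd : 0 < d) by (unfold d; lra).
    assert (Hn2 : INR n > / d) by (eapply Rle_lt_trans; [apply Rmax_l|exact Hn1]).
    assert (Hn3 : INR n > - X w) by (eapply Rle_lt_trans; [apply Rmax_r|exact Hn1]).
    set (r := (X w + INR n) * INR (S n)).
    assert (Hr : 0 < r). { unfold r. apply Rmult_lt_0_compat. lra. apply lt_0_INR; lia. }
    destruct (archimed r) as [A1 A2].
    assert (Hup : (1 <= up r)%Z). { apply le_IZR. simpl. assert (0 < IZR (up r)) by lra.
      assert (0 < up r)%Z by (apply lt_IZR; auto). apply IZR_le; lia. }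
    exists n, (Z.to_nat (up r - 1)).
    assert (Ha : INR (Z.to_nat (up r - 1)) = IZR (up r) - 1).
    { rewrite INR_IZR_INZ, Z2Nat.id by lia. rewrite minus_IZR; reflexivity. }
    assert (HSn : 0 < INR (S n)) by (apply lt_0_INR; lia).
    assert (Er : r = X w * INR (S n) + INR n * INR (S n)) by (unfold r; ring).
    assert (E1 : (r - 1) / INR (S n) = X w + INR n - / INR (S n)) by (rewrite Er; field; lra).
    assert (E2 : r / INR (S n) = X w + INR n) by (rewrite Er; field; lra).
    assert (Hq1 : qgrid n (Z.to_nat (up r - 1)) <= X w).
    { unfold qgrid. rewrite Ha. assert ((IZR (up r) - 1) / INR (S n) <= r / INR (S n)).
      { apply Rmult_le_compat_r. left; apply Rinv_0_lt_compat; auto. lra. } lra. }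
    assert (Hq2 : X w - / INR (S n) < qgrid n (Z.to_nat (up r - 1))).
    { unfold qgrid. rewrite Ha. assert ((r - 1) / INR (S n) < (IZR (up r) - 1) / INR (S n)).
      { apply Rmult_lt_compat_r. apply Rinv_0_lt_compat; auto. lra. } lra. }
    assert (Hinv : / INR (S n) < d).
    { rewrite <- (Rinv_inv d). apply Rinv_lt_contravar. apply Rmult_lt_0_compat; auto. apply Rinv_0_lt_compat; auto.
      rewrite S_INR; lra. }
    split; [lra|]. unfold d in Hinv. lra.
  - intros Hle [n [a [H1 H2]]]. lra.
Qed.

Fixpoint desc (l : list R) : Prop :=
  match l with nil => True | x :: l' => Forall (fun y => y <= x) l' /\ desc l' end.

Definition gtb (a x : R) : bool := if Rlt_dec a x then true else false.
Definition cnt (a : R) (l : list R) : nat := length (filter (gtb a) l).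

Lemma cnt_cons a x l : cnt a (x :: l) = ((if Rlt_dec a x then 1 else 0) + cnt a l)%nat.
Proof. unfold cnt, gtb; simpl. destruct (Rlt_dec a x); reflexivity. Qed.

Lemma ins_in x l y : In y (ins_desc x l) <-> x = y \/ In y l.
Proof.
  induction l as [|z l IH]; simpl. tauto.
  destruct (Rle_dec z x); simpl. tauto. rewrite IH. tauto.
Qed.

Lemma sort_in l y : In y (sort_desc l) <-> In y l.
Proof. induction l; simpl. tauto. rewrite ins_in, IHl. intuition. Qed.

Lemma ins_cnt a x l : cnt a (ins_desc x l) = cnt a (x :: l).
Proof.
  induction l as [|z l IH]; simpl. reflexivity.
  destruct (Rle_dec z x). reflexivity.
  rewrite !cnt_cons. rewrite IH. rewrite !cnt_cons. lia.
Qed.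

Lemma sort_cnt a l : cnt a (sort_desc l) = cnt a l.
Proof. induction l; simpl. reflexivity. rewrite ins_cnt, !cnt_cons, IHl. reflexivity. Qed.

Lemma ins_len x l : length (ins_desc x l) = S (length l).
Proof. induction l; simpl; auto. destruct (Rle_dec a x); simpl; auto. Qed.

Lemma sort_len l : length (sort_desc l) = length l.
Proof. induction l; simpl; auto. rewrite ins_len; auto. Qed.

Lemma ins_desc_ok x l : desc l -> desc (ins_desc x l).
Proof.
  induction l as [|z l IH]; simpl; intros H.
  - split; auto.
  - destruct H as [H1 H2]. destruct (Rle_dec z x).
    + simpl. split; [|split; auto]. constructor; auto. eapply Forall_impl; [|exact H1]. intros; simpl in *; lra.
    + simpl. split; [|apply IH; auto]. apply Forall_forall. intros y Hy. apply ins_in in Hy.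
      destruct Hy as [<-|Hy]; [lra|]. rewrite Forall_forall in H1; auto.
Qed.

Lemma sort_desc_ok l : desc (sort_desc l).
Proof. induction l; simpl; auto. apply ins_desc_ok; auto. Qed.

Lemma ins_desc_cons x y s : desc (y :: s) -> ins_desc x (y :: s) = Rmax x y :: ins_desc (Rmin x y) s.
Proof.
  intros [H1 H2]. simpl. destruct (Rle_dec y x).
  - rewrite Rmax_left by lra. rewrite Rmin_right by lra. f_equal.
    destruct s as [|z s]; simpl; auto. inversion H1; subst. destruct (Rle_dec z y); [reflexivity|lra].
  - rewrite Rmax_right by lra. rewrite Rmin_left by lra. reflexivity.
Qed.

Lemma cnt_pos_in a l : (0 < cnt a l)%nat -> exists z, In z l /\ a < z.
Proof.
  induction l as [|x l IH]; intros H. unfold cnt in H; simpl in H; lia.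
  rewrite cnt_cons in H. destruct (Rlt_dec a x). exists x; simpl; auto.
  destruct (IH ltac:(lia)) as [z [Hz1 Hz2]]. exists z; simpl; auto.
Qed.

Lemma skipn_in {A} p (l : list A) z : In z (skipn p l) -> In z l.
Proof. revert l; induction p; intros [|x l]; simpl; auto. Qed.

Lemma cnt_skip a p s : desc s -> cnt a (skipn p s) = 0%nat \/ cnt a s = (p + cnt a (skipn p s))%nat.
Proof.
  revert s; induction p as [|p IH]; intros s Hs. right; simpl; auto.
  destruct s as [|y s]. left; reflexivity.
  simpl skipn. destruct Hs as [H1 H2].
  destruct (IH s H2) as [E|E]. left; auto.
  destruct (Nat.eq_dec (cnt a (skipn p s)) 0) as [E0|E0]. left; auto.
  right. destruct (cnt_pos_in a (skipn p s) ltac:(lia)) as [z [Hz1 Hz2]].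
  apply skipn_in in Hz1. rewrite Forall_forall in H1. specialize (H1 z Hz1).
  rewrite cnt_cons. destruct (Rlt_dec a y); [|lra]. lia.
Qed.

Fixpoint sumN (f : nat -> R) (M : nat) : R :=
  match M with O => 0 | S M' => sumN f M' + f M' end.

Lemma sumN_plus f g M : sumN (fun m => f m + g m) M = sumN f M + sumN g M.
Proof. induction M; simpl; [ring|rewrite IHM; ring]. Qed.

Lemma sumN_le f g M : (forall m, (m < M)%nat -> f m <= g m) -> sumN f M <= sumN g M.
Proof. induction M; simpl; intros H. lra. apply Rplus_le_compat; auto. Qed.

Lemma sumN_nonneg f M : (forall m, (m < M)%nat -> 0 <= f m) -> 0 <= sumN f M.
Proof. intros H. replace 0 with (sumN (fun _ => 0) M). apply sumN_le; auto. induction M; simpl; auto. rewrite IHM; auto; ring. Qed.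

Lemma sumN_scal c f M : sumN (fun m => c * f m) M = c * sumN f M.
Proof. induction M; simpl; [ring|rewrite IHM; ring]. Qed.

Definition ind (a x : R) : R := if Rlt_dec a x then 1 else 0.

Lemma point_bound (l x : R) (M : nat) : 0 < l -> x <= l ->
  x <= l / 2 ^ M + sumN (fun m => l / 2 ^ (S m) * ind (l / 2 ^ (S m)) x) M.
Proof.
  intros Hl Hx. induction M.
  - simpl. lra.
  - cbn [sumN]. assert (H2 : 0 < 2 ^ M) by (apply pow_lt; lra).
    assert (E : l / 2 ^ M = l / 2 ^ S M + l / 2 ^ S M) by (simpl; field; lra).
    destruct (Rlt_dec (l / 2 ^ S M) x) as [h|h].
    { assert (ind (l / 2 ^ S M) x = 1) by (unfold ind; destruct (Rlt_dec _ _); tauto). rewrite H. lra. }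
    assert (ind (l / 2 ^ S M) x = 0) by (unfold ind; destruct (Rlt_dec _ _); tauto). rewrite H.
    assert (0 <= sumN (fun m => l / 2 ^ S m * ind (l / 2 ^ S m) x) M).
    { apply sumN_nonneg. intros m _. unfold ind. destruct (Rlt_dec _ _).
      rewrite Rmult_1_r. left; apply Rdiv_lt_0_compat; auto; apply pow_lt; lra. lra. }
    assert (0 < l / 2 ^ S M) by (apply Rdiv_lt_0_compat; auto; apply pow_lt; lra). lra.
Qed.

Definition lsum (l : list R) : R := fold_right Rplus 0 l.

Lemma list_bound (l : R) (L : list R) (M : nat) : 0 < l -> Forall (fun x => x <= l) L ->
  lsum L <= INR (length L) * (l / 2 ^ M) + sumN (fun m => l / 2 ^ (S m) * INR (cnt (l / 2 ^ (S m)) L)) M.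
Proof.
  intros Hl. induction L as [|x L IH]; intros HF.
  - simpl. rewrite Rmult_0_l, Rplus_0_l. apply sumN_nonneg. intros; rewrite Rmult_0_r; lra.
  - inversion HF; subst. simpl lsum. simpl length. rewrite S_INR.
    pose proof (point_bound l x M Hl H1). specialize (IH H2).
    assert (E : sumN (fun m => l / 2 ^ S m * INR (cnt (l / 2 ^ S m) (x :: L))) M =
       sumN (fun m => l / 2 ^ S m * ind (l / 2 ^ S m) x) M + sumN (fun m => l / 2 ^ S m * INR (cnt (l / 2 ^ S m) L)) M).
    { rewrite <- sumN_plus. f_equal. apply functional_extensionality. intro m.
      rewrite cnt_cons, plus_INR. unfold ind. destruct (Rlt_dec _ _); simpl; ring. }
    rewrite E. lra.
Qed.

Lemma skipn_len_le {A} p (l : list A) : (length (skipn p l) <= length l)%nat.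
Proof. rewrite length_skipn. lia. Qed.

Lemma det_bound (vals : list R) (l : R) (k M : nat) (n : nat -> nat) :
  0 < l -> Forall (fun x => x <= l) vals ->
  (forall m, (m < M)%nat -> (cnt (l / 2 ^ (S m)) vals <= k - 1 + n m)%nat) ->
  lsum (skipn (k - 1) (sort_desc vals)) <=
    INR (length vals) * (l / 2 ^ M) + sumN (fun m => l / 2 ^ (S m) * INR (n m)) M.
Proof.
  intros Hl HF Hc.
  set (s := sort_desc vals). set (b := skipn (k - 1) s).
  assert (Hb : Forall (fun x => x <= l) b).
  { apply Forall_forall. intros z Hz. unfold b in Hz. apply skipn_in in Hz. unfold s in Hz.
    apply (proj1 (sort_in vals z)) in Hz. rewrite Forall_forall in HF; auto. }
  eapply Rle_trans; [apply (list_bound l b M Hl Hb)|].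
  apply Rplus_le_compat.
  - apply Rmult_le_compat_r. left; apply Rdiv_lt_0_compat; auto; apply pow_lt; lra.
    apply le_INR. unfold b, s. eapply Nat.le_trans; [apply skipn_len_le|]. rewrite sort_len; lia.
  - apply sumN_le. intros m Hm. apply Rmult_le_compat_l. left; apply Rdiv_lt_0_compat; auto; apply pow_lt; lra.
    apply le_INR. specialize (Hc m Hm).
    destruct (cnt_skip (l / 2 ^ S m) (k - 1) s (sort_desc_ok vals)) as [E|E]; fold b in E.
    + rewrite E; lia.
    + unfold s in E. rewrite sort_cnt in E. lia.
Qed.

Fixpoint fins {Om} (f : Om -> R) (L : list (Om -> R)) : list (Om -> R) :=
  match L with
  | nil => f :: nil
  | h :: L' => (fun w => Rmax (f w) (h w)) :: fins (fun w => Rmin (f w) (h w)) L'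
  end.

Fixpoint fsort {Om} (L : list (Om -> R)) : list (Om -> R) :=
  match L with nil => nil | f :: L' => fins f (fsort L') end.

Definition evalL {Om} (w : Om) (L : list (Om -> R)) : list R := map (fun f => f w) L.

Lemma fins_eval {Om} (w : Om) f L : desc (evalL w L) -> evalL w (fins f L) = ins_desc (f w) (evalL w L).
Proof.
  revert f; induction L as [|h L IH]; intros f Hd. reflexivity.
  simpl fins. change (evalL w (h :: L)) with (h w :: evalL w L).
  rewrite ins_desc_cons by exact Hd. simpl. f_equal. apply IH. destruct Hd; auto.
Qed.

Lemma fsort_eval {Om} (w : Om) L : evalL w (fsort L) = sort_desc (evalL w L).
Proof.
  induction L as [|f L IH]. reflexivity.
  simpl fsort. rewrite fins_eval. rewrite IH; reflexivity. rewrite IH; apply sort_desc_ok.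
Qed.

Lemma fins_mf Ps f L : mf Ps f -> Forall (mf Ps) L -> Forall (mf Ps) (fins f L).
Proof.
  revert f; induction L as [|h L IH]; intros f Hf HL; simpl. constructor; auto.
  inversion HL; subst. constructor. apply mf_max; auto. apply IH; auto. apply mf_min; auto.
Qed.

Lemma fsort_mf Ps L : Forall (mf Ps) L -> Forall (mf Ps) (fsort L).
Proof. induction L; simpl; intros H; auto. inversion H; subst. apply fins_mf; auto. Qed.

Lemma lsum_mf Ps L : Forall (mf Ps) L -> mf Ps (fun w => lsum (evalL w L)).
Proof.
  induction L as [|f L IH]; intros H; simpl. apply mf_const.
  inversion H; subst. apply mf_plus; auto.
Qed.

Lemma Forall_skipn {A} (P : A -> Prop) p l : Forall P l -> Forall P (skipn p l).
Proof. intros H. apply Forall_forall. intros z Hz. apply skipn_in in Hz. rewrite Forall_forall in H; auto. Qed.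

Lemma evalL_skipn {Om} (w : Om) p L : evalL w (skipn p L) = skipn p (evalL w L).
Proof. revert L; induction p; intros [|f L]; simpl; auto. Qed.

Lemma S_ord_eq {Om} (sigma : nat -> Om -> R) i k w :
  S_ord sigma i k w = lsum (evalL w (skipn (k - 1) (fsort (map sigma (seq 1 i))))).
Proof.
  unfold S_ord. rewrite evalL_skipn, fsort_eval. unfold evalL. rewrite map_map. reflexivity.
Qed.

Lemma S_ord_mf Ps sigma i k : (forall j, random_variable Ps (sigma j)) -> mf Ps (S_ord sigma i k).
Proof.
  intros Hrv.
  assert (HF : Forall (mf Ps) (skipn (k - 1) (fsort (map sigma (seq 1 i))))).
  { apply Forall_skipn, fsort_mf. apply Forall_forall. intros f Hf. apply in_map_iff in Hf.
    destruct Hf as [j [<- _]]. apply Hrv. }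
  intros x. eapply meas_ext; [|apply (lsum_mf Ps _ HF x)].
  intro w. cbv beta. rewrite S_ord_eq. tauto.
Qed.

Definition Gd (Ps : ProbSpace) (sigma : nat -> Omega Ps -> R) (x : R) : R :=
  Pr Ps (fun w => sigma 0%nat w <= x).

Definition inb {Om} (sigma : nat -> Om -> R) (w : Om) (t : nat * option R * R) : Prop :=
  let '(j, lo, hi) := t in
  (match lo with None => True | Some a => a < sigma j w end) /\ sigma j w <= hi.

Definition boxP {Om} (sigma : nat -> Om -> R) (bs : list (nat * option R * R)) (w : Om) : Prop :=
  Forall (inb sigma w) bs.

Definition wt (G : R -> R) (t : nat * option R * R) : R :=
  let '(j, lo, hi) := t in G hi - match lo with None => 0 | Some a => G a end.

Definition valid (bs : list (nat * option R * R)) : Prop :=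
  Forall (fun t => match t with (_, Some a, hi) => a <= hi | _ => True end) bs.

Definition idx (bs : list (nat * option R * R)) : list nat := map (fun t => fst (fst t)) bs.

Definition prodR (l : list R) : R := fold_right Rmult 1 l.

Definition upd (xs : nat -> R) (j : nat) (h : R) : nat -> R :=
  fun j' => if Nat.eq_dec j' j then h else xs j'.

Lemma meas_Forall {A} Ps (P : A -> Omega Ps -> Prop) l :
  (forall x, In x l -> meas Ps (P x)) -> meas Ps (fun w => Forall (fun x => P x w) l).
Proof.
  induction l as [|x l IH]; intros H.
  - eapply meas_ext; [|apply meas_full]. intro; split; auto.
  - eapply meas_ext; [|apply (meas_and Ps (P x) _ (H x (or_introl eq_refl)) (IH (fun y Hy => H y (or_intror Hy))))].
    intro w; split. intros [H1 H2]; constructor; auto. intros H1; inversion H1; auto.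
Qed.

Lemma meas_inb Ps sigma t : (forall j, random_variable Ps (sigma j)) -> meas Ps (fun w => inb sigma w t).
Proof.
  intros Hrv. destruct t as [[j lo] hi]. unfold inb. destruct lo as [a|].
  - apply meas_and. apply mf_gt, Hrv. apply (Hrv j hi).
  - eapply meas_ext; [|apply (Hrv j hi)]. intro w; tauto.
Qed.

Lemma meas_box Ps sigma bs js xs : (forall j, random_variable Ps (sigma j)) ->
  meas Ps (fun w => boxP sigma bs w /\ Forall (fun j => sigma j w <= xs j) js).
Proof.
  intros Hrv. apply meas_and.
  - apply (meas_Forall Ps (fun t w => inb sigma w t)). intros; apply meas_inb; auto.
  - apply (meas_Forall Ps (fun j w => sigma j w <= xs j)). intros; apply Hrv.
Qed.

Lemma Forall_upd {Om} (sigma : nat -> Om -> R) w xs j h js : ~ In j js ->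
  (Forall (fun j' => sigma j' w <= upd xs j h j') js <-> Forall (fun j' => sigma j' w <= xs j') js).
Proof.
  intros Hn. rewrite !Forall_forall. split; intros H x Hx; specialize (H x Hx); unfold upd in *;
  destruct (Nat.eq_dec x j); subst; tauto.
Qed.

Lemma map_upd (G : R -> R) xs j h js : ~ In j js ->
  map (fun j' => G (upd xs j h j')) js = map (fun j' => G (xs j')) js.
Proof.
  intros Hn. apply map_ext_in. intros x Hx. unfold upd. destruct (Nat.eq_dec x j); subst; tauto.
Qed.

Lemma box_formula Ps sigma : iid Ps sigma ->
  forall bs js xs, valid bs -> NoDup (idx bs ++ js) ->
  Pr Ps (fun w => boxP sigma bs w /\ Forall (fun j => sigma j w <= xs j) js)
  = prodR (map (wt (Gd Ps sigma)) bs) * prodR (map (fun j => Gd Ps sigma (xs j)) js).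
Proof.
  intros [Hrv [Hlaw Hind]]. induction bs as [|t bs IH]; intros js xs Hv Hnd.
  - simpl. rewrite Rmult_1_l.
    rewrite (Pr_ext Ps _ (fun w => Forall (fun j => sigma j w <= xs j) js)) by (intro; unfold boxP; split; [tauto|split; auto]).
    rewrite Hind by exact Hnd. unfold prodR. f_equal. apply map_ext. intro j. unfold Gd; apply Hlaw.
  - destruct t as [[j lo] h]. simpl in Hnd. inversion Hnd as [|? ? Hnin Hnd']. subst.
    assert (Hnd2 : NoDup (idx bs ++ j :: js)) by (eapply Permutation_NoDup; [apply Permutation_middle|exact Hnd]).
    assert (Hj : ~ In j js) by (intro; apply Hnin; apply in_or_app; auto).
    inversion Hv as [|? ? Hv1 Hv2]; subst.
    assert (Eh : forall hh, Pr Ps (fun w => boxP sigma bs w /\ Forall (fun j' => sigma j' w <= upd xs j hh j') (j :: js))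
      = prodR (map (wt (Gd Ps sigma)) bs) * (Gd Ps sigma hh * prodR (map (fun j' => Gd Ps sigma (xs j')) js))).
    { intro hh. rewrite IH by auto. f_equal. simpl. unfold upd at 1. destruct (Nat.eq_dec j j); [|tauto].
      f_equal. f_equal. apply map_upd; auto. }
    destruct lo as [a|].
    + assert (Ea := Eh a). specialize (Eh h).
      rewrite (Pr_ext Ps (fun w => boxP sigma bs w /\ Forall (fun j' => sigma j' w <= upd xs j h j') (j :: js))
        (fun w => (boxP sigma ((j, Some a, h) :: bs) w /\ Forall (fun j0 => sigma j0 w <= xs j0) js) \/
                  (boxP sigma bs w /\ Forall (fun j' => sigma j' w <= upd xs j a j') (j :: js)))) in Eh.
      2:{ intro w. unfold boxP. rewrite !Forall_cons_iff, !Forall_upd by auto. simpl inb. unfold upd.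
          destruct (Nat.eq_dec j j); [|tauto]. split.
          - intros [H1 [H2 H3]]. destruct (Rlt_dec a (sigma j w)). left; tauto. right; split; auto; split; auto; lra.
          - intros [[[[H1 H2] H3] H4]|[H1 [H2 H3]]]; split; auto; split; auto. simpl in Hv1. lra. }
      rewrite Pr_add in Eh.
      * rewrite Ea in Eh. simpl. unfold prodR in *. simpl. lra.
      * apply (meas_box Ps sigma ((j, Some a, h) :: bs) js xs Hrv).
      * apply (meas_box Ps sigma bs (j :: js) (upd xs j a) Hrv).
      * intros w [HA _] [_ H2]. unfold boxP in HA. inversion HA as [|? ? Hi _]; subst. simpl in Hi.
        inversion H2 as [|? ? H3 _]; subst. unfold upd in H3. destruct (Nat.eq_dec j j); [|tauto]. lra.
    + specialize (Eh h). rewrite <- (Pr_ext Ps (fun w => boxP sigma bs w /\ Forall (fun j' => sigma j' w <= upd xs j h j') (j :: js))).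
      * rewrite Eh. simpl. unfold prodR; simpl. ring.
      * intro w. unfold boxP. rewrite !Forall_cons_iff, !Forall_upd by auto. simpl inb. unfold upd.
        destruct (Nat.eq_dec j j); [|tauto]. tauto.
Qed.

Definition cntE {Om} (sigma : nat -> Om -> R) (a : R) (js : list nat) (w : Om) : nat :=
  cnt a (map (fun j => sigma j w) js).

Lemma meas_cnt Ps sigma a js : (forall j, random_variable Ps (sigma j)) ->
  forall r, meas Ps (fun w => (r <= cntE sigma a js w)%nat).
Proof.
  intros Hrv. induction js as [|j js IH]; intros r.
  - destruct r. eapply meas_ext; [|apply meas_full]. intro; split; auto; intros; lia.
    eapply meas_ext; [|apply meas_empty]. intro w; unfold cntE, cnt; simpl; split; [tauto|lia].
  - eapply meas_ext; [|apply (meas_or Ps _ _ (meas_and Ps _ _ (mf_gt Ps _ a (Hrv j)) (IH (r - 1)%nat))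
                                          (meas_and Ps _ _ (Hrv j a) (IH r)))].
    intro w. unfold cntE. simpl map. rewrite cnt_cons. destruct (Rlt_dec a (sigma j w)) as [h|h]; split.
    + intros [[_ H]|[H _]]; [lia| lra].
    + intros H; left; split; [exact h | lia].
    + intros [[H _]|[_ H]]; [lra|lia].
    + intros H; right; split; [lra|lia].
Qed.

Lemma bern2 x r : 0 <= x -> x ^ (S r) + INR (S r) * x ^ r <= (x + 1) ^ (S r).
Proof.
  intros Hx. induction r.
  - simpl. lra.
  - rewrite (S_INR (S r)). change ((x + 1) ^ S (S r)) with ((x + 1) * (x + 1) ^ S r).
    assert (0 <= x ^ r) by (apply pow_le; auto).
    assert (0 <= x + 1) by lra.
    apply Rle_trans with ((x + 1) * (x ^ S r + INR (S r) * x ^ r)).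
    + change (x ^ S (S r)) with (x * (x * x ^ r)). change (x ^ S r) with (x * x ^ r).
      assert (0 <= INR (S r)) by apply pos_INR. set (y := x ^ r) in *. nra.
    + apply Rmult_le_compat_l; auto.
Qed.

Definition EvC {Om} (sigma : nat -> Om -> R) (a l : R) (js : list nat) (r : nat) bs (w : Om) : Prop :=
  (r <= cntE sigma a js w)%nat /\ Forall (fun j => sigma j w <= l) js /\ boxP sigma bs w.

Lemma box_single Ps sigma : iid Ps sigma -> forall bs, valid bs -> NoDup (idx bs) ->
  Pr Ps (boxP sigma bs) = prodR (map (wt (Gd Ps sigma)) bs).
Proof.
  intros Hiid bs Hv Hnd. rewrite (Pr_ext Ps _ (fun w => boxP sigma bs w /\ Forall (fun j => sigma j w <= 0) nil)).
  rewrite (box_formula Ps sigma Hiid bs nil (fun _ => 0)); auto. cbn [map]. unfold prodR at 2. cbn [fold_right]. ring.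
  rewrite app_nil_r; auto. intro; split; auto. tauto.
Qed.

Lemma Gd_mono Ps sigma x y : iid Ps sigma -> x <= y -> Gd Ps sigma x <= Gd Ps sigma y.
Proof.
  intros [Hrv _] H. apply Pr_mono; try apply Hrv. intros; lra.
Qed.

Lemma Gd_nonneg Ps sigma x : iid Ps sigma -> 0 <= Gd Ps sigma x.
Proof. intros [Hrv _]. apply Pr_nonneg, Hrv. Qed.

Lemma count_bound Ps sigma (a l : R) : iid Ps sigma -> a <= l -> 0 < Gd Ps sigma l ->
  forall js r bs, valid bs -> NoDup (idx bs ++ js) ->
  meas Ps (EvC sigma a l js r bs) /\
  Pr Ps (EvC sigma a l js r bs) <=
    INR (length js) ^ r / INR (fact r) * ((Gd Ps sigma l - Gd Ps sigma a) / Gd Ps sigma l) ^ r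
    * Gd Ps sigma l ^ (length js) * Pr Ps (boxP sigma bs).
Proof.
  intros Hiid Hal Hq. pose proof Hiid as [Hrv _].
  set (q := Gd Ps sigma l) in *. set (p := q - Gd Ps sigma a) in *.
  assert (Hp : 0 <= p) by (unfold p, q; pose proof (Gd_mono Ps sigma a l Hiid Hal); lra).
  assert (Hmeas : forall js r bs, meas Ps (EvC sigma a l js r bs)).
  { intros js r bs. unfold EvC. apply meas_and. apply meas_cnt; auto. apply meas_and.
    apply (meas_Forall Ps (fun j w => sigma j w <= l)). intros; apply Hrv.
    apply (meas_Forall Ps (fun t w => inb sigma w t)). intros; apply meas_inb; auto. }
  assert (HB : forall bs, valid bs -> NoDup (idx bs) -> 0 <= Pr Ps (boxP sigma bs)).
  { intros bs _ _. apply Pr_nonneg. apply (meas_Forall Ps (fun t w => inb sigma w t)). intros; apply meas_inb; auto. }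
  induction js as [|j js IH]; intros r bs Hv Hnd; split; auto.
  - rewrite app_nil_r in Hnd. destruct r.
    + rewrite (Pr_ext Ps (EvC sigma a l nil 0 bs) (boxP sigma bs)).
      { simpl. unfold Rdiv. rewrite Rinv_1. lra. }
      intro w; unfold EvC; split; [tauto| intros H; split; [lia|split; auto]].
    + rewrite (Pr_ext Ps (EvC sigma a l nil (S r) bs) (fun _ => False)). rewrite Pr_empty.
      simpl. rewrite Rmult_0_l. unfold Rdiv. rewrite !Rmult_0_l. lra.
      intro w; unfold EvC, cntE, cnt; simpl; split; [lia|tauto].
  - simpl in Hnd.
    assert (Hnd2 : NoDup (j :: idx bs ++ js)) by (eapply Permutation_NoDup; [apply Permutation_sym, Permutation_middle|exact Hnd]).
    assert (Hnd3 : NoDup (j :: idx bs)).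
    { inversion Hnd2; subst. constructor. intro; apply H1; apply in_or_app; auto. eapply NoDup_app_remove_r; eauto. }
    assert (HBj : forall lo hi, valid ((j, lo, hi) :: bs) -> Pr Ps (boxP sigma ((j, lo, hi) :: bs)) = wt (Gd Ps sigma) (j, lo, hi) * Pr Ps (boxP sigma bs)).
    { intros lo hi Hv'. rewrite !box_single; auto. eapply NoDup_app_remove_r; eauto. }
    simpl length. destruct r.
    + rewrite (Pr_ext Ps _ (EvC sigma a l js 0 ((j, None, l) :: bs))).
      2:{ intro w. unfold EvC, boxP. rewrite !Forall_cons_iff. simpl inb. split. intros [_ [[H1 H2] H3]]; split; [lia|tauto]. intros [_ [H1 [[_ H2] H3]]]; split; [lia|tauto]. }
      destruct (IH 0%nat ((j, None, l) :: bs)) as [_ Hb]. constructor; auto. simpl. exact Hnd2.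
      rewrite HBj in Hb by (constructor; auto). simpl in Hb. simpl. fold q in Hb |- *.
      unfold Rdiv in *. rewrite Rinv_1 in *. lra.
    + rewrite (Pr_ext Ps _ (fun w => EvC sigma a l js r ((j, Some a, l) :: bs) w \/ EvC sigma a l js (S r) ((j, None, a) :: bs) w)).
      2:{ intro w. unfold EvC, boxP, cntE. simpl map. rewrite cnt_cons, !Forall_cons_iff. simpl inb.
          destruct (Rlt_dec a (sigma j w)); split.
          - intros [H1 [[H2 H3] H4]]. left. split; [lia|]. tauto.
          - intros [[H1 [H2 [[H3 H4] H5]]]|[H1 [H2 [[H3 H4] H5]]]]; [|lra]. split; [lia|]. split; [split; [lra|auto]|auto].
          - intros [H1 [[H2 H3] H4]]. right. split; [lia|]. split; auto. split; auto. split; auto. lra.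
          - intros [[H1 [H2 [[H3 H4] H5]]]|[H1 [H2 [[H3 H4] H5]]]]; [lra|]. split; [lia|]. split; [split; [lra|auto]|auto]. }
      eapply Rle_trans; [apply Pr_sub; apply Hmeas|].
      destruct (IH r ((j, Some a, l) :: bs)) as [_ Hb1]. constructor; auto. simpl. exact Hnd2.
      destruct (IH (S r) ((j, None, a) :: bs)) as [_ Hb2]. constructor; auto. simpl. exact Hnd2.
      rewrite HBj in Hb1 by (constructor; auto). rewrite HBj in Hb2 by (constructor; auto). simpl wt in Hb1, Hb2.
      fold q p in Hb1, Hb2 |- *. rewrite Rminus_0_r in Hb2.
      set (n := INR (length js)) in *. set (PB := Pr Ps (boxP sigma bs)) in *.
      assert (HPB : 0 <= PB) by (apply HB; auto; eapply NoDup_cons_iff; eauto).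
      assert (Hn : 0 <= n) by apply pos_INR.
      assert (Hga : 0 <= Gd Ps sigma a <= q) by (split; [apply Gd_nonneg; auto| apply Gd_mono; auto]).
      set (x := p / q). assert (Hx : 0 <= x) by (unfold x; apply Rmult_le_pos; [auto|left; apply Rinv_0_lt_compat; auto]).
      assert (Epq : p = x * q) by (unfold x; field; lra).
      assert (Hf : 0 < INR (fact r)) by (apply INR_fact_lt_0).
      assert (Hf2 : INR (fact (S r)) = INR (S r) * INR (fact r)) by (rewrite fact_simpl, mult_INR; reflexivity).
      assert (Hbern := bern2 n r Hn).
      assert (HSr : 0 < INR (S r)) by (apply lt_0_INR; lia).
      assert (Hxr : 0 <= x ^ S r) by (apply pow_le; auto).
      assert (Hqn : 0 <= q ^ length js) by (apply pow_le; lra).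
      apply Rle_trans with ((n ^ r / INR (fact r) + n ^ S r / INR (fact (S r))) * x ^ S r * q ^ S (length js) * PB).
      * fold x in Hb1, Hb2. rewrite Epq in Hb1. replace ((n ^ r / INR (fact r) + n ^ S r / INR (fact (S r))) * x ^ S r * q ^ S (length js) * PB)
          with (n ^ r / INR (fact r) * x ^ r * q ^ length js * (x * q * PB) + n ^ S r / INR (fact (S r)) * x ^ S r * q ^ length js * (q * PB)).
        2:{ simpl. ring. }
        apply Rplus_le_compat. exact Hb1. eapply Rle_trans; [exact Hb2|]. apply Rmult_le_compat_l.
        apply Rmult_le_pos. apply Rmult_le_pos. apply Rmult_le_pos. apply pow_le; auto. left; apply Rinv_0_lt_compat, INR_fact_lt_0.
        auto. auto. apply Rmult_le_compat_r; auto. lra.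
      * rewrite S_INR in *. fold n. apply Rmult_le_compat_r; auto. apply Rmult_le_compat_r. apply pow_le; lra.
        apply Rmult_le_compat_r; auto. rewrite Hf2.
        replace (n ^ r / INR (fact r) + n ^ S r / ((INR r + 1) * INR (fact r))) with ((n ^ S r + (INR r + 1) * n ^ r) / ((INR r + 1) * INR (fact r))).
        2:{ field. split; lra. }
        unfold Rdiv. apply Rmult_le_compat_r. left. apply Rinv_0_lt_compat. apply Rmult_lt_0_compat; lra. lra.
Qed.

Lemma tail_to_0 Ps (X : Omega Ps -> R) : mf Ps X ->
  forall eps, 0 < eps -> exists U, forall u, U <= u -> Pr Ps (fun w => X w > u) < eps.
Proof.
  intros HX eps Heps.
  set (A := fun (n : nat) w => X w >= INR n /\ X w < INR (S n)).
  assert (HA : forall n, meas Ps (A n)) by (intro n; unfold A; apply meas_and; [apply mf_ge|apply mf_lt]; auto).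
  pose proof (Pr_countably_additive Ps A HA) as H.
  assert (Hd : forall n m w, n <> m -> A n w -> A m w -> False).
  { intros n m w Hnm [H1 H2] [H3 H4]. rewrite S_INR in *.
    destruct (Nat.lt_total n m) as [Hl|[Hl|Hl]]; [|tauto|].
    - apply le_INR in Hl. rewrite S_INR in Hl. lra.
    - apply le_INR in Hl. rewrite S_INR in Hl. lra. }
  specialize (H Hd).
  rewrite (Pr_ext Ps _ (fun w => X w >= 0)) in H.
  2:{ intro w. split.
      - intros [n [Hn _]]. pose proof (pos_INR n). lra.
      - intros Hx. destruct (archimed (X w)) as [H1 H2].
        assert (Hz : (1 <= up (X w))%Z).
        { assert (0 < IZR (up (X w))) by lra. apply lt_IZR in H0. lia. }
        exists (Z.to_nat (up (X w) - 1)). unfold A.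
        rewrite S_INR, INR_IZR_INZ, Z2Nat.id by lia. rewrite minus_IZR. simpl. lra. }
  assert (Hge : forall x, meas Ps (fun w => X w >= x)) by (intro; apply mf_ge; auto).
  assert (Hdec : forall N, Pr Ps (fun w => X w >= 0) = sum_f_R0 (fun n => Pr Ps (A n)) N + Pr Ps (fun w => X w >= INR (S N))).
  { induction N.
    - simpl. rewrite (Pr_ext Ps (fun w => X w >= 0) (fun w => A 0%nat w \/ X w >= 1)).
      rewrite Pr_add; auto. intros w [_ H1] H2. simpl in H1. lra.
      intro w; unfold A; simpl; split; [intros; destruct (Rlt_dec (X w) 1); [left|right]; lra|intros [[H1 H2]|H1]; lra].
    - rewrite IHN. simpl sum_f_R0. rewrite Rplus_assoc. f_equal.
      rewrite (Pr_ext Ps (fun w => X w >= INR (S N)) (fun w => A (S N) w \/ X w >= INR (S (S N)))).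
      rewrite Pr_add; auto. intros w [_ H1] H2. lra.
      intro w; unfold A; split; [intros; destruct (Rlt_dec (X w) (INR (S (S N)))); [left|right]; lra|].
      rewrite (S_INR (S N)). intros [[H1 H2]|H1]; lra. }
  destruct (H eps Heps) as [N HN]. specialize (HN N (le_n N)). unfold Rdist in HN.
  exists (INR (S N)). intros u Hu.
  apply Rle_lt_trans with (Pr Ps (fun w => X w >= INR (S N))).
  - apply Pr_mono; [apply mf_gt; auto|apply Hge|]. intros w Hw; lra.
  - rewrite (Hdec N) in HN. rewrite Rabs_minus_sym in HN.
    replace (sum_f_R0 (fun n => Pr Ps (A n)) N + Pr Ps (fun w => X w >= INR (S N)) - sum_f_R0 (fun n => Pr Ps (A n)) N)
      with (Pr Ps (fun w => X w >= INR (S N))) in HN by ring.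
    pose proof (Rle_abs (Pr Ps (fun w => X w >= INR (S N)))). lra.
Qed.

Lemma lim_ev_ext f g l U : (forall u, U <= u -> f u = g u) -> lim_infty f l -> lim_infty g l.
Proof.
  intros He H eps Heps. destruct (H eps Heps) as [M HM]. exists (Rmax M U). intros u Hu.
  rewrite <- He. apply HM. eapply Rle_trans; [apply Rmax_l|exact Hu]. eapply Rle_trans; [apply Rmax_r|exact Hu].
Qed.

Lemma lim_plus f g a b : lim_infty f a -> lim_infty g b -> lim_infty (fun u => f u + g u) (a + b).
Proof.
  intros Hf Hg eps Heps. destruct (Hf (eps/2)) as [M1 H1]; [lra|]. destruct (Hg (eps/2)) as [M2 H2]; [lra|].
  exists (Rmax M1 M2). intros u Hu. specialize (H1 u (Rle_trans _ _ _ (Rmax_l _ _) Hu)).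
  specialize (H2 u (Rle_trans _ _ _ (Rmax_r _ _) Hu)).
  replace (f u + g u - (a + b)) with ((f u - a) + (g u - b)) by ring.
  eapply Rle_lt_trans; [apply Rabs_triang|]. lra.
Qed.

Lemma lim_opp f a : lim_infty f a -> lim_infty (fun u => - f u) (- a).
Proof.
  intros Hf eps Heps. destruct (Hf eps Heps) as [M HM]. exists M. intros u Hu.
  replace (- f u - - a) with (- (f u - a)) by ring. rewrite Rabs_Ropp; auto.
Qed.

Lemma lim_const c : lim_infty (fun _ => c) c.
Proof. intros eps Heps. exists 0. intros. replace (c - c) with 0 by ring. rewrite Rabs_R0; auto. Qed.

Lemma lim_bounded f a : lim_infty f a -> exists M B, forall u, M <= u -> Rabs (f u) <= B.
Proof.
  intros Hf. destruct (Hf 1) as [M HM]; [lra|]. exists M, (Rabs a + 1). intros u Hu.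
  specialize (HM u Hu). replace (f u) with ((f u - a) + a) by ring.
  eapply Rle_trans; [apply Rabs_triang|]. lra.
Qed.

Lemma lim_mult f g a b : lim_infty f a -> lim_infty g b -> lim_infty (fun u => f u * g u) (a * b).
Proof.
  intros Hf Hg eps Heps.
  destruct (lim_bounded f a Hf) as [M0 [B HB]].
  set (B' := Rabs B + Rabs b + 1).
  assert (HB' : 0 < B') by (unfold B'; pose proof (Rabs_pos B); pose proof (Rabs_pos b); lra).
  assert (HBB : Rabs B + Rabs b + 1 <= B') by (unfold B'; lra).
  clearbody B'.
  destruct (Hf (eps / (4 * B'))) as [M1 H1]. apply Rdiv_lt_0_compat; lra.
  destruct (Hg (eps / (4 * B'))) as [M2 H2]. apply Rdiv_lt_0_compat; lra.
  exists (Rmax M0 (Rmax M1 M2)). intros u Hu.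
  assert (Hu0 : M0 <= u) by (eapply Rle_trans; [apply Rmax_l|exact Hu]).
  assert (Hu1 : M1 <= u) by (eapply Rle_trans; [eapply Rle_trans; [apply Rmax_l|apply Rmax_r]|exact Hu]).
  assert (Hu2 : M2 <= u) by (eapply Rle_trans; [eapply Rle_trans; [apply Rmax_r|apply Rmax_r]|exact Hu]).
  specialize (HB u Hu0). specialize (H1 u Hu1). specialize (H2 u Hu2).
  replace (f u * g u - a * b) with (f u * (g u - b) + (f u - a) * b) by ring.
  eapply Rle_lt_trans; [apply Rabs_triang|]. rewrite !Rabs_mult.
  assert (Rabs (f u) <= B') by (pose proof (Rle_abs B); pose proof (Rabs_pos b); lra).
  assert (Rabs b <= B') by (pose proof (Rabs_pos B); lra).
  assert (Rabs (f u) * Rabs (g u - b) <= B' * (eps / (4 * B'))).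
  { apply Rmult_le_compat; auto using Rabs_pos. lra. }
  assert (Rabs (f u - a) * Rabs b <= (eps / (4 * B')) * B').
  { apply Rmult_le_compat; auto using Rabs_pos. lra. }
  assert (Rabs (f u) * Rabs (g u - b) + Rabs (f u - a) * Rabs b <= eps / 2).
  { assert (E : B' * (eps / (4 * B')) + eps / (4 * B') * B' = eps / 2) by (field; lra). lra. }
  lra.
Qed.

Lemma lim_inv f a : a <> 0 -> lim_infty f a -> lim_infty (fun u => / f u) (/ a).
Proof.
  intros Ha Hf eps Heps.
  set (d := Rabs a). assert (Hd : 0 < d) by (apply Rabs_pos_lt; auto).
  destruct (Hf (Rmin (d / 2) (eps * d * d / 2))) as [M HM].
  { apply Rmin_glb_lt. lra. apply Rdiv_lt_0_compat; [|lra]. apply Rmult_lt_0_compat; [apply Rmult_lt_0_compat|]; lra. }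
  exists M. intros u Hu. specialize (HM u Hu).
  assert (H1 : Rabs (f u - a) < d / 2) by (eapply Rlt_le_trans; [exact HM|apply Rmin_l]).
  assert (H2 : Rabs (f u - a) < eps * d * d / 2) by (eapply Rlt_le_trans; [exact HM|apply Rmin_r]).
  assert (Hfu : d / 2 <= Rabs (f u)).
  { pose proof (Rabs_triang_inv a (a - f u)). replace (a - (a - f u)) with (f u) in H by ring.
    rewrite Rabs_minus_sym in H1. fold d in H. lra. }
  assert (Hf0 : f u <> 0) by (intro E; rewrite E, Rabs_R0 in Hfu; lra).
  replace (/ f u - / a) with ((a - f u) / (f u * a)) by (field; auto).
  unfold Rdiv. rewrite Rabs_mult, Rabs_inv, Rabs_mult. rewrite Rabs_minus_sym. fold d.
  apply Rle_lt_trans with (Rabs (f u - a) * / (d / 2 * d)).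
  - apply Rmult_le_compat_l. apply Rabs_pos. apply Rinv_le_contravar. apply Rmult_lt_0_compat; lra.
    apply Rmult_le_compat_r; lra.
  - apply (Rmult_lt_reg_r (d / 2 * d)). apply Rmult_lt_0_compat; lra.
    rewrite Rmult_assoc, Rinv_l by (apply Rgt_not_eq, Rmult_lt_0_compat; lra). rewrite Rmult_1_r.
    replace (eps * (d / 2 * d)) with (eps * d * d / 2) by field. exact H2.
Qed.

Lemma lim_half f a : lim_infty f a -> lim_infty (fun u => f (u / 2)) a.
Proof.
  intros Hf eps Heps. destruct (Hf eps Heps) as [M HM]. exists (2 * M). intros u Hu.
  apply HM. destruct (Rle_dec 0 M). lra. lra.
Qed.

Lemma g_pos L g kf : AssumptionA L g kf ->
  exists M1, (forall u, M1 <= u -> 0 < g u) /\ (forall u v, M1 <= u -> u <= v -> g v <= g u).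
Proof.
  intros [_ [Hg0 [[M Hmono] [HA [w0 [Hw0 [Hk _]]]]]]].
  exists M. assert (Hnn : forall u, M <= u -> 0 <= g u).
  { intros u Hu. apply Rnot_lt_le. intro Hlt. destruct (Hg0 (- g u)) as [N HN]; [lra|].
    set (v := Rmax u N). specialize (HN v (Rmax_r _ _)). specialize (Hmono u v Hu (Rmax_l _ _)).
    rewrite Rminus_0_r in HN. pose proof (Rle_abs (- g v)). rewrite Rabs_Ropp in H. lra. }
  split; auto.
  intros u Hu. destruct (Rle_lt_or_eq_dec 0 (g u) (Hnn u Hu)) as [H|H]; auto. exfalso.
  assert (Hz : forall v, u <= v -> g v = 0).
  { intros v Hv. pose proof (Hmono u v Hu Hv). pose proof (Hnn v (Rle_trans _ _ _ Hu Hv)). lra. }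
  destruct (HA w0 Hw0 (Rabs (kf w0))) as [N HN]. apply Rabs_pos_lt; auto.
  specialize (HN (Rmax u N) (Rmax_r _ _)). rewrite (Hz (Rmax u N) (Rmax_l _ _)) in HN.
  rewrite Rdiv_0_r in HN. rewrite Rminus_0_l, Rabs_Ropp in HN. lra.
Qed.

Lemma g_to_0 L g kf : AssumptionA L g kf -> lim_infty g 0.
Proof. intros [_ [H _]]; exact H. Qed.

Lemma ratio_bound (F g kf : R -> R) : (forall u, 0 < F u) -> AssumptionA (fun u => / F u) g kf ->
  exists C M2, 0 < C /\ forall u, M2 <= u -> 0 < g u /\ F (u / 2) / F u <= 1 + C * g u /\ C * g u <= 1.
Proof.
  intros HF HAs. destruct (g_pos _ _ _ HAs) as [M1 [Hgp _]].
  pose proof HAs as [_ [Hg0 [_ [HA _]]]].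
  set (kap := kf (/ 2)). set (C0 := Rabs kap + 1).
  assert (HC0 : 0 < C0) by (unfold C0; pose proof (Rabs_pos kap); lra).
  destruct (HA (/ 2) ltac:(lra) 1 ltac:(lra)) as [Ma HMa].
  destruct (Hg0 (/ (2 * C0))) as [Mg HMg]. apply Rinv_0_lt_compat; lra.
  exists (2 * C0), (Rmax M1 (Rmax Ma Mg)). split; [lra|]. intros u Hu.
  assert (Hu1 : M1 <= u) by (eapply Rle_trans; [apply Rmax_l|exact Hu]).
  assert (Hua : Ma <= u) by (eapply Rle_trans; [eapply Rle_trans; [apply Rmax_l|apply Rmax_r]|exact Hu]).
  assert (Hug : Mg <= u) by (eapply Rle_trans; [eapply Rle_trans; [apply Rmax_r|apply Rmax_r]|exact Hu]).
  specialize (Hgp u Hu1). specialize (HMa u Hua). specialize (HMg u Hug).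
  rewrite Rminus_0_r, Rabs_right in HMg by lra.
  assert (HCg : C0 * g u < / 2).
  { assert (E : C0 * / (2 * C0) = / 2) by (field; lra). apply (Rmult_lt_compat_l C0) in HMg; auto. lra. }
  split; auto.
  set (A := F u) in *. set (B := F (u / 2)) in *.
  assert (HA0 : 0 < A) by apply HF. assert (HB0 : 0 < B) by apply HF.
  change (u * / 2) with (u / 2) in HMa. fold B in HMa.
  replace (/ B / / A) with (A / B) in HMa by (field; split; lra).
  fold kap in HMa.
  assert (Ht : (A / B - 1) / g u > kap - 1).
  { pose proof (Rabs_def2 _ _ HMa) as [_ H2]. lra. }
  assert (Ht2 : A / B - 1 > (kap - 1) * g u).
  { apply (Rmult_gt_compat_r (g u)) in Ht; auto. unfold Rdiv at 1 in Ht. rewrite Rmult_assoc, Rinv_l in Ht by lra. lra. }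
  assert (Hk : kap - 1 >= - C0) by (unfold C0; pose proof (Rle_abs (- kap)); rewrite Rabs_Ropp in H; lra).
  assert (Ht3 : A / B > 1 - C0 * g u) by nra.
  assert (HAB : A > (1 - C0 * g u) * B).
  { apply (Rmult_gt_compat_r B) in Ht3; auto. unfold Rdiv in Ht3. rewrite Rmult_assoc, Rinv_l in Ht3 by lra. lra. }
  split; [|lra].
  apply (Rmult_le_reg_r A); auto. unfold Rdiv. rewrite Rmult_assoc, Rinv_l, Rmult_1_r by lra.
  set (y := C0 * g u) in *. assert (0 <= y) by (unfold y; nra).
  replace (2 * C0 * g u) with (2 * y) by (unfold y; ring).
  assert (E1 : 0 <= y * (1 - 2 * y)) by (apply Rmult_le_pos; lra).
  assert (E2 : 0 <= B * (y * (1 - 2 * y))) by (apply Rmult_le_pos; lra).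
  assert (E3 : (1 + 2 * y) * ((1 - y) * B) <= (1 + 2 * y) * A) by (apply Rmult_le_compat_l; lra).
  lra.
Qed.

Lemma g_ratio_lim (L g kf : R -> R) : (forall u, 0 < L u) ->
  (forall v, 0 < v -> lim_infty (fun u => L (u * v) / L u) 1) -> AssumptionA L g kf ->
  exists psi, lim_infty (fun u => g (u / 2) / g u) psi.
Proof.
  intros HL Hsv HAs. destruct (g_pos _ _ _ HAs) as [M1 [Hgp _]].
  pose proof HAs as [_ [_ [_ [HA [w0 [Hw0 [Hk _]]]]]]].
  set (A1 := fun u => (L (u * (w0 / 2)) / L u - 1) / g u).
  set (A2 := fun u => (L (u * / 2) / L u - 1) / g u).
  set (A3 := fun u => (L (u / 2 * w0) / L (u / 2) - 1) / g (u / 2)).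
  set (R := fun u => L (u * / 2) / L u).
  assert (H1 : lim_infty A1 (kf (w0 / 2))) by (apply HA; lra).
  assert (H2 : lim_infty A2 (kf (/ 2))) by (apply HA; lra).
  assert (H3 : lim_infty A3 (kf w0)) by (apply (lim_half (fun u => (L (u * w0) / L u - 1) / g u)); apply HA; lra).
  assert (H4 : lim_infty R 1) by (apply Hsv; lra).
  assert (H34 : lim_infty (fun u => A3 u * R u) (kf w0 * 1)) by (apply lim_mult; auto).
  exists ((kf (w0 / 2) + - kf (/ 2)) * / (kf w0 * 1)).
  destruct (H34 (Rabs (kf w0))) as [M3 HM3]. apply Rabs_pos_lt; auto.
  apply (lim_ev_ext (fun u => (A1 u + - A2 u) * / (A3 u * R u)) _ _ (Rmax (Rmax M1 (2 * M1)) M3)).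
  - intros u Hu.
    assert (Hu1 : M1 <= u) by (eapply Rle_trans; [eapply Rle_trans; [apply Rmax_l|apply Rmax_l]|exact Hu]).
    assert (Hu2 : 2 * M1 <= u) by (eapply Rle_trans; [eapply Rle_trans; [apply Rmax_r|apply Rmax_l]|exact Hu]).
    assert (Hu3 : M3 <= u) by (eapply Rle_trans; [apply Rmax_r|exact Hu]).
    specialize (HM3 u Hu3). rewrite Rmult_1_r in HM3.
    assert (HAR : A3 u * R u <> 0).
    { intro E. rewrite E, Rminus_0_l, Rabs_Ropp in HM3. lra. }
    assert (g1 : 0 < g u) by auto. assert (g2 : 0 < g (u / 2)) by (apply Hgp; lra).
    unfold A1, A2, A3, R in *.
    replace (u * (w0 / 2)) with (u / 2 * w0) by (unfold Rdiv; ring).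
    change (u * / 2) with (u / 2) in *.
    pose proof (HL u). pose proof (HL (u / 2)). pose proof (HL (u / 2 * w0)).
    assert (Hcb : L (u / 2 * w0) - L (u / 2) <> 0).
    { intro E. apply HAR. replace (L (u / 2 * w0)) with (L (u / 2)) by lra.
      unfold Rdiv at 2. rewrite Rinv_r by lra. unfold Rdiv at 1. rewrite Rminus_diag, Rmult_0_l, Rmult_0_l. reflexivity. }
    field. repeat split; lra.
  - apply lim_mult. apply lim_plus; auto. apply lim_opp; auto. apply lim_inv. rewrite Rmult_1_r; auto. auto.
Qed.

Lemma INR_le_pow2 n : INR n <= 2 ^ n.
Proof. induction n. simpl; lra. rewrite S_INR. simpl. assert (1 <= 2 ^ n) by (apply pow_R1_Rle; lra). lra. Qed.

Lemma exp_mono_le x y : x <= y -> exp x <= exp y.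
Proof. intros H. destruct (Rle_lt_or_eq_dec _ _ H) as [H'|H']. left; apply exp_increasing; auto. rewrite H'; lra. Qed.

Lemma g_ratio_eventually (F g kf : R -> R) :
  (forall u, 0 < F u) -> (forall x y, x <= y -> F y <= F x) ->
  (forall eps, 0 < eps -> exists U, forall u, U <= u -> F u < eps) ->
  (forall v, 0 < v -> lim_infty (fun u => / F (u * v) / / F u) 1) ->
  AssumptionA (fun u => / F u) g kf ->
  forall rho, 1 < rho -> exists M3, forall u, M3 <= u -> g (u / 2) <= rho * g u.
Proof.
  intros HF Hmon Hto0 Hsv HAs rho Hrho.
  destruct (g_ratio_lim (fun u => / F u) g kf) as [psi Hpsi]; auto.
  { intro u; apply Rinv_0_lt_compat, HF. }
  destruct (ratio_bound F g kf HF HAs) as [C [M2 [HC HM2]]].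
  assert (Hpsi1 : psi <= 1).
  { apply Rnot_lt_le. intro Hgt. set (p' := (1 + psi) / 2).
    destruct (Hpsi ((psi - 1) / 2)) as [Mp HMp]. lra.
    set (U1 := Rmax (Rmax Mp M2) 1).
    assert (HU1 : forall u, U1 <= u -> Mp <= u /\ M2 <= u /\ 1 <= u).
    { intros u Hu; unfold U1 in Hu. repeat split; eapply Rle_trans; try exact Hu.
      eapply Rle_trans; [apply Rmax_l|apply Rmax_l]. eapply Rle_trans; [apply Rmax_r|apply Rmax_l]. apply Rmax_r. }
    assert (Hp' : 1 < p') by (unfold p'; lra).
    set (th := / p'). assert (Hth : 0 < th < 1).
    { unfold th; split. apply Rinv_0_lt_compat; lra. rewrite <- Rinv_1. apply Rinv_lt_contravar; lra. }
    set (T := fun n => (1 - th ^ n) / (p' - 1)).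
    assert (HU1pos : 1 <= U1) by (apply HU1; lra).
    set (G1 := g U1). assert (HG1 : 0 < G1) by (apply HM2, HU1; lra).
    assert (Hind : forall n, g (2 ^ n * U1) <= G1 * th ^ n /\ F U1 <= F (2 ^ n * U1) * exp (C * G1 * T n)).
    { induction n as [|n [IH1 IH2]].
      - simpl. rewrite Rmult_1_l, Rmult_1_r. unfold T. simpl. replace ((1 - 1) / (p' - 1)) with 0 by (field; lra).
        rewrite Rmult_0_r, exp_0. unfold G1. lra.
      - set (un := 2 ^ n * U1) in *. assert (Hun : U1 <= un).
        { unfold un. assert (1 <= 2 ^ n) by (apply pow_R1_Rle; lra). nra. }
        assert (E : 2 ^ S n * U1 = 2 * un) by (unfold un; simpl; ring). rewrite E.
        assert (Hu : U1 <= 2 * un) by lra. destruct (HU1 _ Hu) as [Hm1 [Hm2 _]].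
        specialize (HMp _ Hm1). replace (2 * un / 2) with un in HMp by field.
        destruct (HM2 _ Hm2) as [Hg2 [Hf2 Hc2]]. replace (2 * un / 2) with un in Hf2 by field.
        pose proof (Rabs_def2 _ _ HMp) as [_ Hr].
        assert (Hgr : g (2 * un) * p' < g un).
        { assert (g un / g (2 * un) > p') by (unfold p'; lra).
          apply (Rmult_lt_compat_r (g (2 * un))) in H; auto. unfold Rdiv in H. rewrite Rmult_assoc, Rinv_l in H by lra. lra. }
        assert (Hg : g (2 * un) <= G1 * th ^ S n).
        { assert (E1 : G1 * th ^ S n = G1 * th ^ n * th) by (simpl; ring). rewrite E1.
          assert (E2 : g (2 * un) = g (2 * un) * p' * th) by (unfold th; field; lra). rewrite E2.
          apply Rmult_le_compat_r; lra. }
        split; auto.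
        pose proof (HF un) as Hfun. pose proof (HF (2 * un)) as Hf2un.
        assert (Hrat : F un <= F (2 * un) * exp (C * G1 * th ^ S n)).
        { assert (Hq : F un / F (2 * un) <= exp (C * G1 * th ^ S n)).
          { eapply Rle_trans; [exact Hf2|]. eapply Rle_trans; [apply exp_ineq1_le|]. apply exp_mono_le.
            rewrite Rmult_assoc. apply Rmult_le_compat_l; lra. }
          apply (Rmult_le_compat_r (F (2 * un))) in Hq; [|lra].
          unfold Rdiv in Hq. rewrite Rmult_assoc, Rinv_l, Rmult_1_r in Hq by lra. lra. }
        assert (ET : T (S n) = T n + th ^ S n) by (unfold T, th; simpl; field; lra).
        rewrite ET, Rmult_plus_distr_l, exp_plus.
        eapply Rle_trans; [exact IH2|].
        assert (H5 : F un * exp (C * G1 * T n) <= F (2 * un) * exp (C * G1 * th ^ S n) * exp (C * G1 * T n))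
          by (apply Rmult_le_compat_r; [left; apply exp_pos| exact Hrat]).
        assert (E5 : F (2 * un) * (exp (C * G1 * T n) * exp (C * G1 * th ^ S n)) = F (2 * un) * exp (C * G1 * th ^ S n) * exp (C * G1 * T n)) by ring.
        lra. }
    set (K := C * G1 / (p' - 1)).
    assert (Hf0 : forall n, F U1 * exp (- K) <= F (2 ^ n * U1)).
    { intro n. destruct (Hind n) as [_ H]. 
      assert (HT : C * G1 * T n <= K).
      { unfold K, T. unfold Rdiv.
        assert (0 <= th ^ n) by (apply pow_le; lra).
        assert (0 < / (p' - 1)) by (apply Rinv_0_lt_compat; lra).
        assert (0 <= C * G1 * / (p' - 1)) by (apply Rmult_le_pos; [apply Rmult_le_pos|]; lra).
        replace (C * G1 * ((1 - th ^ n) * / (p' - 1))) with ((C * G1 * / (p' - 1)) * (1 - th ^ n)) by ring.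
        rewrite <- (Rmult_1_r (C * G1 * / (p' - 1))) at 2. apply Rmult_le_compat_l; lra. }
      apply (Rmult_le_compat_r (exp (- K))) in H; [|left; apply exp_pos].
      eapply Rle_trans; [exact H|]. rewrite Rmult_assoc, <- exp_plus.
      pose proof (HF (2 ^ n * U1)).
      assert (exp (C * G1 * T n + - K) <= 1).
      { rewrite <- exp_0. apply exp_mono_le. lra. }
      nra. }
    assert (Hpos : 0 < F U1 * exp (- K)) by (apply Rmult_lt_0_compat; [apply HF|apply exp_pos]).
    destruct (Hto0 _ Hpos) as [U HU].
    destruct (INR_unbounded (U / U1)) as [n Hn].
    assert (U < 2 ^ n * U1).
    { pose proof (INR_le_pow2 n). apply Rlt_le_trans with (INR n * U1).
      apply (Rmult_lt_compat_r U1) in Hn; [|lra]. unfold Rdiv in Hn. rewrite Rmult_assoc, Rinv_l in Hn by lra. lra.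
      apply Rmult_le_compat_r; lra. }
    specialize (HU (2 ^ n * U1) ltac:(lra)). specialize (Hf0 n). lra. }
  destruct (Hpsi (rho - psi)) as [Ml HMl]. lra.
  exists (Rmax Ml M2). intros u Hu.
  specialize (HMl u (Rle_trans _ _ _ (Rmax_l _ _) Hu)).
  destruct (HM2 u (Rle_trans _ _ _ (Rmax_r _ _) Hu)) as [Hg _].
  pose proof (Rabs_def2 _ _ HMl) as [H1 _].
  assert (g (u / 2) / g u < rho) by lra.
  apply (Rmult_lt_compat_r (g u)) in H; auto. unfold Rdiv in H. rewrite Rmult_assoc, Rinv_l, Rmult_1_r in H by lra. lra.
Qed.

Lemma bernoulli_le rho n : 1 <= rho -> 1 + INR n * (rho - 1) <= rho ^ n.
Proof.
  intros H. induction n. simpl; lra. rewrite S_INR. simpl.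
  assert (0 <= INR n) by apply pos_INR.
  assert (0 <= (rho - 1) * (rho ^ n - (1 + INR n * (rho - 1)))) by (apply Rmult_le_pos; lra).
  assert (0 <= (rho - 1) * (INR n * (rho - 1))) by (apply Rmult_le_pos; [lra| apply Rmult_le_pos; lra]).
  nra.
Qed.

Lemma exp_pow_n y n : exp y ^ n = exp (INR n * y).
Proof. induction n. simpl. rewrite Rmult_0_l, exp_0; reflexivity. rewrite S_INR. simpl. rewrite IHn, <- exp_plus. f_equal; ring. Qed.

Lemma geom_sum x M : 0 <= x < 1 -> sumN (fun m => x ^ m) M <= / (1 - x).
Proof.
  intros Hx. assert (E : forall M, sumN (fun m => x ^ m) M = (1 - x ^ M) / (1 - x)).
  { induction M0. simpl. field; lra. simpl sumN. rewrite IHM0. simpl. field. lra. }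
  rewrite E. unfold Rdiv. rewrite <- (Rmult_1_l (/ (1 - x))) at 2. apply Rmult_le_compat_r.
  left; apply Rinv_0_lt_compat; lra. assert (0 <= x ^ M) by (apply pow_le; lra). lra.
Qed.

Lemma rho_choice k : (1 <= k)%nat -> let rho := 1 + / (6 * INR k) in 1 < rho /\ rho ^ (3 * k) < 7 / 4.
Proof.
  intros Hk rho. assert (Hk' : 1 <= INR k) by (apply (le_INR 1); auto).
  assert (Hy : 0 < / (6 * INR k)) by (apply Rinv_0_lt_compat; lra).
  split. unfold rho; lra.
  apply Rle_lt_trans with (exp (/ (6 * INR k)) ^ (3 * k)).
  - apply pow_incr. split. unfold rho; lra. unfold rho. apply exp_ineq1_le.
  - rewrite exp_pow_n. rewrite mult_INR. replace (INR 3 * INR k * / (6 * INR k)) with (/ 2) by (simpl; field; lra).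
    assert (E : exp (/ 2) * exp (/ 2) = exp 1) by (rewrite <- exp_plus; f_equal; lra).
    pose proof exp_le_3. pose proof (exp_pos (/ 2)). nra.
Qed.

Lemma deep_chain (F g : R -> R) (rho C U0 : R) :
  (forall u, 0 < F u) -> (forall x y, x <= y -> F y <= F x) -> 1 <= rho -> 0 < U0 ->
  (forall u, U0 <= u -> 0 < g u /\ F (u / 2) / F u <= 1 + C * g u /\ C * g u <= rho - 1 /\ g (u / 2) <= rho * g u) ->
  (forall u v, U0 <= u -> u <= v -> g v <= g u) ->
  forall n u, U0 <= u -> u <= 2 ^ n * (2 * U0) -> F (2 * U0) <= rho ^ n * F u /\ g (2 * U0) <= rho ^ n * g u.
Proof.
  intros HF Hmon Hrho HU0 HH Hdec. induction n; intros u Hu1 Hu2.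
  - simpl in *. rewrite !Rmult_1_l in *. split. apply Hmon; lra. apply Hdec; lra.
  - destruct (Rle_dec u (2 ^ n * (2 * U0))) as [Hle|Hgt].
    + destruct (IHn u Hu1 Hle) as [H1 H2]. destruct (HH u Hu1) as [Hg _].
      assert (rho ^ n <= rho ^ S n) by (apply Rle_pow; auto).
      pose proof (HF u). split; nra.
    + assert (Hp : 1 <= 2 ^ n) by (apply pow_R1_Rle; lra).
      assert (Hu3 : U0 <= u / 2). { assert (2 * U0 <= 2 ^ n * (2 * U0)) by nra. lra. }
      assert (Hu4 : u / 2 <= 2 ^ n * (2 * U0)) by (simpl in Hu2; lra).
      destruct (IHn (u / 2) Hu3 Hu4) as [H1 H2].
      assert (HuU : U0 <= u) by lra.
      destruct (HH u HuU) as [Hg [Hr [Hc Hgg]]].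
      pose proof (HF u) as Fu. pose proof (HF (u / 2)) as Fu2.
      assert (Hr' : F (u / 2) <= rho * F u).
      { apply (Rmult_le_compat_r (F u)) in Hr; [|lra]. unfold Rdiv in Hr. rewrite Rmult_assoc, Rinv_l, Rmult_1_r in Hr by lra. nra. }
      assert (0 < rho ^ n) by (apply pow_lt; lra).
      simpl. split; nra.
Qed.

Lemma shallow_chain (F g : R -> R) (rho C U0 l : R) :
  (forall u, 0 < F u) -> 1 <= rho -> 0 < C -> 0 < l ->
  (forall u, U0 <= u -> 0 < g u /\ F (u / 2) / F u <= 1 + C * g u /\ C * g u <= rho - 1 /\ g (u / 2) <= rho * g u) ->
  forall n, (forall r, (r < n)%nat -> U0 <= l / 2 ^ r) ->
    g (l / 2 ^ n) <= rho ^ n * g l /\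
    F (l / 2 ^ n) / F l <= rho ^ n /\ F (l / 2 ^ n) / F l <= 1 + INR n * C * g l * rho ^ (2 * n).
Proof.
  intros HF Hrho HC Hl HH. induction n; intros Hr.
  - simpl. unfold Rdiv. rewrite Rinv_1, Rmult_1_r, Rinv_r by (apply Rgt_not_eq, HF). split; [lra|]. split; lra.
  - assert (Hr' : forall r, (r < n)%nat -> U0 <= l / 2 ^ r) by (intros; apply Hr; lia).
    destruct (IHn Hr') as [Hg [HX1 HX2]].
    set (un := l / 2 ^ n) in *.
    assert (Hun : U0 <= un) by (apply Hr; lia).
    destruct (HH un Hun) as [Hgp [Hrat [Hc Hgg]]].
    assert (E : l / 2 ^ S n = un / 2) by (unfold un; simpl; field; apply pow_nonzero; lra).
    rewrite E.
    assert (Hgl : 0 < g l).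
    { destruct n. unfold un in Hgp. simpl in Hgp. unfold Rdiv in Hgp. rewrite Rinv_1, Rmult_1_r in Hgp. auto.
      assert (0 < rho ^ S n) by (apply pow_lt; lra). nra. }
    pose proof (HF un) as Fun. pose proof (HF (un / 2)) as Fun2. pose proof (HF l) as Fl.
    assert (Hpn : 0 < rho ^ n) by (apply pow_lt; lra).
    set (X := F un / F l) in *. set (a := C * g un) in *.
    assert (Ha0 : 0 <= a) by (unfold a; nra).
    assert (Ha1 : a <= C * rho ^ n * g l) by (unfold a; rewrite Rmult_assoc; apply Rmult_le_compat_l; lra).
    assert (EX : F (un / 2) / F l = X * (F (un / 2) / F un)) by (unfold X; field; split; lra).
    assert (HX0 : 0 <= X) by (unfold X; apply Rmult_le_pos; [lra|left; apply Rinv_0_lt_compat; lra]).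
    assert (Hq0 : 0 <= F (un / 2) / F un) by (apply Rmult_le_pos; [lra|left; apply Rinv_0_lt_compat; lra]).
    rewrite EX. split; [|split].
    + simpl. nra.
    + simpl. assert (X * (F (un / 2) / F un) <= rho ^ n * (1 + a)) by (apply Rmult_le_compat; lra). nra.
    + rewrite S_INR.
      assert (H1 : X * (F (un / 2) / F un) <= X * (1 + a)) by (apply Rmult_le_compat_l; lra).
      assert (H2 : X * a <= rho ^ n * (C * rho ^ n * g l)) by (apply Rmult_le_compat; lra).
      assert (H3 : rho ^ (2 * n) <= rho ^ (2 * S n)) by (apply Rle_pow; lia || auto).
      assert (E2 : rho ^ n * (C * rho ^ n * g l) = C * g l * rho ^ (2 * n)).
      { replace (2 * n)%nat with (n + n)%nat by lia. rewrite pow_add. ring. }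
      assert (0 <= C * g l) by nra. assert (0 <= INR n) by apply pos_INR.
      assert (INR n * C * g l * rho ^ (2 * n) <= INR n * C * g l * rho ^ (2 * S n)).
      { rewrite !(Rmult_assoc (INR n)). apply Rmult_le_compat_l; auto. apply Rmult_le_compat_l; auto. }
      assert (C * g l * rho ^ (2 * n) <= C * g l * rho ^ (2 * S n)) by (apply Rmult_le_compat_l; auto).
      nra.
Qed.

Lemma analysis_main (F g kf : R -> R) (k : nat) :
  (forall u, 0 < F u) -> (forall u, F u <= 1) -> (forall x y, x <= y -> F y <= F x) ->
  (forall eps, 0 < eps -> exists U, forall u, U <= u -> F u < eps) ->
  (forall v, 0 < v -> lim_infty (fun u => / F (u * v) / / F u) 1) ->
  AssumptionA (fun u => / F u) g kf -> (1 <= k)%nat ->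
  exists K l0, 0 < K /\ forall l, l0 <= l ->
    0 < g l /\ F l <= / 2 /\
    forall M, sumN (fun m => (F (l / 2 ^ (S m)) / F l - 1) ^ k / (7 / 4) ^ m) M <= K * g l ^ k.
Proof.
  intros HF HF1 Hmon Hto0 Hsv HAs Hk.
  destruct (rho_choice k Hk) as [Hrho Hrk]. set (rho := 1 + / (6 * INR k)) in *.
  destruct (ratio_bound F g kf HF HAs) as [C [M2 [HC HM2]]].
  destruct (g_pos _ _ _ HAs) as [M1 [Hgp Hgd]].
  destruct (g_ratio_eventually F g kf HF Hmon Hto0 Hsv HAs rho Hrho) as [M3 HM3].
  destruct (g_to_0 _ _ _ HAs ((rho - 1) / C)) as [M4 HM4]. apply Rdiv_lt_0_compat; lra.
  destruct (Hto0 (/ 2)) as [M5 HM5]. lra.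
  set (U0 := Rmax (Rmax (Rmax M1 M2) (Rmax M3 M4)) 1).
  assert (HU : forall u, U0 <= u -> M1 <= u /\ M2 <= u /\ M3 <= u /\ M4 <= u /\ 1 <= u).
  { intros u Hu. unfold U0 in Hu.
    pose proof (Rmax_l (Rmax (Rmax M1 M2) (Rmax M3 M4)) 1). pose proof (Rmax_r (Rmax (Rmax M1 M2) (Rmax M3 M4)) 1).
    pose proof (Rmax_l (Rmax M1 M2) (Rmax M3 M4)). pose proof (Rmax_r (Rmax M1 M2) (Rmax M3 M4)).
    pose proof (Rmax_l M1 M2). pose proof (Rmax_r M1 M2). pose proof (Rmax_l M3 M4). pose proof (Rmax_r M3 M4).
    repeat split; lra. }
  assert (HU0 : 1 <= U0) by (apply HU; lra).
  assert (HH : forall u, U0 <= u -> 0 < g u /\ F (u / 2) / F u <= 1 + C * g u /\ C * g u <= rho - 1 /\ g (u / 2) <= rho * g u).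
  { intros u Hu. destruct (HU u Hu) as [H1 [H2 [H3 [H4 _]]]].
    destruct (HM2 u H2) as [Hg [Hr _]]. split; auto. split; auto. split.
    - specialize (HM4 u H4). rewrite Rminus_0_r in HM4. pose proof (Rle_abs (g u)).
      assert (g u < (rho - 1) / C) by lra. apply (Rmult_lt_compat_l C) in H0; auto.
      unfold Rdiv in H0. rewrite <- Rmult_assoc, (Rmult_comm C (rho - 1)), Rmult_assoc, Rinv_r, Rmult_1_r in H0 by lra. lra.
    - apply HM3; auto. }
  assert (Hdec : forall u v, U0 <= u -> u <= v -> g v <= g u) by (intros u v Hu Huv; apply Hgd; auto; apply HU; auto).
  assert (Hrho1 : 1 <= rho) by lra.
  set (x := rho ^ (3 * k) / (7 / 4)).
  assert (Hx : 0 <= x < 1).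
  { unfold x. split. apply Rmult_le_pos. apply pow_le; lra. lra.
    apply (Rmult_lt_reg_r (7 / 4)). lra. unfold Rdiv. rewrite Rmult_assoc, Rinv_l by lra. lra. }
  set (G0 := g (2 * U0)). set (F0 := F (2 * U0)).
  assert (HG0 : 0 < G0) by (apply HH; lra). assert (HF0 : 0 < F0) by apply HF.
  set (K1 := / (F0 * G0)). assert (HK1 : 0 < K1) by (apply Rinv_0_lt_compat, Rmult_lt_0_compat; auto).
  set (K2 := (C / (rho - 1)) ^ k * rho ^ (3 * k) + K1 ^ k).
  assert (HK2 : 0 < K2).
  { unfold K2. assert (0 < K1 ^ k) by (apply pow_lt; auto). assert (0 <= (C / (rho - 1)) ^ k * rho ^ (3 * k)).
    apply Rmult_le_pos; apply pow_le. apply Rmult_le_pos; [lra|left; apply Rinv_0_lt_compat; lra]. lra. lra. }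
  exists (K2 / (1 - x)), (Rmax (2 * U0) M5). split. apply Rdiv_lt_0_compat; lra.
  intros l Hl.
  assert (Hl1 : 2 * U0 <= l) by (eapply Rle_trans; [apply Rmax_l|exact Hl]).
  assert (Hl5 : M5 <= l) by (eapply Rle_trans; [apply Rmax_r|exact Hl]).
  assert (Hgl : 0 < g l) by (apply HH; lra).
  split; auto. split. left; apply HM5; auto.
  intro M.
  assert (Hterm : forall m, (F (l / 2 ^ S m) / F l - 1) ^ k / (7 / 4) ^ m <= K2 * g l ^ k * x ^ m).
  { intro m.
    assert (Hl0 : 2 <= l) by lra.
    set (X := F (l / 2 ^ S m) / F l).
    assert (H2m : 0 < 2 ^ m) by (apply pow_lt; lra).
    assert (H2Sm : 1 <= 2 ^ S m) by (apply pow_R1_Rle; lra).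
    assert (HX1 : 1 <= X).
    { unfold X. assert (F l <= F (l / 2 ^ S m)).
      { apply Hmon. unfold Rdiv. rewrite <- (Rmult_1_r l) at 2. apply Rmult_le_compat_l. lra.
        rewrite <- Rinv_1. apply Rinv_le_contravar; lra. }
      pose proof (HF l). apply (Rmult_le_reg_r (F l)); auto. unfold Rdiv. rewrite Rmult_assoc, Rinv_l by lra. lra. }
    assert (H74 : 0 < (7 / 4) ^ m) by (apply pow_lt; lra).
    assert (Hxm : x ^ m = (rho ^ (3 * k)) ^ m * / (7 / 4) ^ m) by (unfold x, Rdiv; rewrite Rpow_mult_distr, pow_inv; auto).
    rewrite Hxm. unfold Rdiv. rewrite <- !Rmult_assoc. apply Rmult_le_compat_r. left; apply Rinv_0_lt_compat; auto.
    assert (Hrkm : 0 <= (rho ^ (3 * k)) ^ m) by (apply pow_le, pow_le; lra).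
    assert (Hgk : 0 <= g l ^ k) by (apply pow_le; lra).
    assert (HCk : 0 <= (C * / (rho - 1)) ^ k) by (apply pow_le; apply Rmult_le_pos; [lra|left; apply Rinv_0_lt_compat; lra]).
    assert (HK1k : 0 <= K1 ^ k) by (apply pow_le; lra).
    destruct (Rle_dec U0 (l / 2 ^ m)) as [HA|HB].
    -
      assert (Hr : forall r, (r < S m)%nat -> U0 <= l / 2 ^ r).
      { intros r Hr. eapply Rle_trans; [exact HA|]. unfold Rdiv. apply Rmult_le_compat_l. lra.
        apply Rinv_le_contravar. apply pow_lt; lra. apply Rle_pow; [lra|lia]. }
      destruct (shallow_chain F g rho C U0 l HF Hrho1 HC ltac:(lra) HH (S m) Hr) as [_ [_ HX]].
      fold X in HX.
      assert (Hb := bernoulli_le rho (S m) Hrho1).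
      assert (Hn : INR (S m) <= rho ^ S m * / (rho - 1)).
      { apply (Rmult_le_reg_r (rho - 1)). lra. rewrite Rmult_assoc, Rinv_l, Rmult_1_r by lra. lra. }
      assert (Hh : X - 1 <= C * / (rho - 1) * g l * rho ^ (3 * S m)).
      { assert (E : rho ^ (3 * S m) = rho ^ S m * rho ^ (2 * S m)) by (rewrite <- pow_add; f_equal; lia).
        rewrite E. assert (0 <= C * g l * rho ^ (2 * S m)) by (apply Rmult_le_pos; [nra|apply pow_le; lra]).
        assert (INR (S m) * (C * g l * rho ^ (2 * S m)) <= rho ^ S m * / (rho - 1) * (C * g l * rho ^ (2 * S m)))
          by (apply Rmult_le_compat_r; auto).
        assert (E2 : INR (S m) * C * g l * rho ^ (2 * S m) = INR (S m) * (C * g l * rho ^ (2 * S m))) by ring.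
        assert (E3 : C * / (rho - 1) * g l * (rho ^ S m * rho ^ (2 * S m)) = rho ^ S m * / (rho - 1) * (C * g l * rho ^ (2 * S m))) by ring.
        lra. }
      apply Rle_trans with ((C * / (rho - 1) * g l * rho ^ (3 * S m)) ^ k).
      + apply pow_incr. lra.
      + set (A := C * / (rho - 1)) in *.
        assert (E0 : (A * g l * rho ^ (3 * S m)) ^ k = A ^ k * g l ^ k * rho ^ (3 * S m * k)).
        { rewrite (pow_mult rho (3 * S m) k). rewrite !Rpow_mult_distr. reflexivity. }
        assert (E : rho ^ (3 * S m * k) = rho ^ (3 * k) * (rho ^ (3 * k)) ^ m).
        { rewrite <- pow_mult, <- pow_add. f_equal. lia. }
        rewrite E0, E. unfold K2.
        assert (0 <= rho ^ (3 * k)) by (apply pow_le; lra).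
        assert (0 <= A ^ k * rho ^ (3 * k) * (g l ^ k * (rho ^ (3 * k)) ^ m))
          by (apply Rmult_le_pos; apply Rmult_le_pos; auto).
        assert (0 <= K1 ^ k * (g l ^ k * (rho ^ (3 * k)) ^ m)) by (apply Rmult_le_pos; [auto|apply Rmult_le_pos; auto]).
        assert (E5 : (A ^ k * rho ^ (3 * k) + K1 ^ k) * g l ^ k * (rho ^ (3 * k)) ^ m
                 = A ^ k * rho ^ (3 * k) * (g l ^ k * (rho ^ (3 * k)) ^ m) + K1 ^ k * (g l ^ k * (rho ^ (3 * k)) ^ m)) by ring.
        assert (E6 : A ^ k * g l ^ k * (rho ^ (3 * k) * (rho ^ (3 * k)) ^ m) = A ^ k * rho ^ (3 * k) * (g l ^ k * (rho ^ (3 * k)) ^ m)) by ring.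
        unfold Rdiv in E5 |- *. fold A in E5 |- *. lra.
    -
      assert (Hlu : l <= 2 ^ m * (2 * U0)).
      { apply Rnot_le_lt in HB. apply (Rmult_lt_compat_r (2 ^ m)) in HB; auto. unfold Rdiv in HB.
        rewrite Rmult_assoc, Rinv_l, Rmult_1_r in HB by lra. nra. }
      destruct (deep_chain F g rho C U0 HF Hmon Hrho1 ltac:(lra) HH Hdec m l ltac:(lra) Hlu) as [D1 D2].
      fold F0 G0 in D1, D2.
      pose proof (HF l) as Fl. pose proof (HF1 (l / 2 ^ S m)) as Fs.
      assert (Hpm : 0 < rho ^ m) by (apply pow_lt; lra).
      assert (HXb : X <= / F l) by (unfold X; unfold Rdiv; rewrite <- (Rmult_1_l (/ F l)) at 2; apply Rmult_le_compat_r; [left; apply Rinv_0_lt_compat|]; lra).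
      assert (Hinv : / F l <= rho ^ m * / F0).
      { apply (Rmult_le_reg_r (F l * F0)). nra.
        replace (/ F l * (F l * F0)) with F0 by (field; lra).
        replace (rho ^ m * / F0 * (F l * F0)) with (rho ^ m * F l) by (field; lra). lra. }
      assert (Hg1 : 1 <= rho ^ m * g l * / G0).
      { apply (Rmult_le_reg_r G0); auto. rewrite Rmult_assoc, Rinv_l, Rmult_1_r by lra. lra. }
      assert (Hh : X - 1 <= K1 * rho ^ (2 * m) * g l).
      { assert (E : K1 * rho ^ (2 * m) * g l = (rho ^ m * / F0) * (rho ^ m * g l * / G0)).
        { unfold K1. replace (2 * m)%nat with (m + m)%nat by lia. rewrite pow_add. field. split; lra. }
        rewrite E. assert (0 <= rho ^ m * / F0) by (apply Rmult_le_pos; [lra|left; apply Rinv_0_lt_compat; lra]).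
        assert (rho ^ m * / F0 * 1 <= rho ^ m * / F0 * (rho ^ m * g l * / G0)) by (apply Rmult_le_compat_l; auto). lra. }
      apply Rle_trans with ((K1 * rho ^ (2 * m) * g l) ^ k).
      + apply pow_incr. lra.
      + assert (E0 : (K1 * rho ^ (2 * m) * g l) ^ k = K1 ^ k * rho ^ (2 * m * k) * g l ^ k).
        { rewrite (pow_mult rho (2 * m) k). rewrite !Rpow_mult_distr. reflexivity. }
        rewrite E0.
        assert (E : rho ^ (2 * m * k) <= (rho ^ (3 * k)) ^ m).
        { rewrite <- pow_mult. apply Rle_pow; auto. nia. }
        assert (0 <= rho ^ (2 * m * k)) by (apply pow_le; lra).
        unfold K2.
        assert (E4 : K1 ^ k * rho ^ (2 * m * k) * g l ^ k <= K1 ^ k * ((rho ^ (3 * k)) ^ m * g l ^ k)).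
        { rewrite Rmult_assoc. apply Rmult_le_compat_l; auto. apply Rmult_le_compat_r; auto. }
        assert (0 <= (C * / (rho - 1)) ^ k * rho ^ (3 * k) * ((rho ^ (3 * k)) ^ m * g l ^ k)).
        { apply Rmult_le_pos; [apply Rmult_le_pos; [auto|apply pow_le; lra]|apply Rmult_le_pos; auto]. }
        assert (E5 : ((C * / (rho - 1)) ^ k * rho ^ (3 * k) + K1 ^ k) * g l ^ k * (rho ^ (3 * k)) ^ m
          = (C * / (rho - 1)) ^ k * rho ^ (3 * k) * ((rho ^ (3 * k)) ^ m * g l ^ k) + K1 ^ k * ((rho ^ (3 * k)) ^ m * g l ^ k)) by ring.
        unfold Rdiv in E5. lra. }
  apply Rle_trans with (sumN (fun m => K2 * g l ^ k * x ^ m) M).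
  - apply sumN_le. intros; apply Hterm.
  - rewrite sumN_scal. assert (0 <= K2 * g l ^ k) by (apply Rmult_le_pos; [lra|apply pow_le; lra]).
    apply Rle_trans with (K2 * g l ^ k * / (1 - x)). apply Rmult_le_compat_l; auto. apply geom_sum; auto.
    right; unfold Rdiv; ring.
Qed.

Lemma pow_le1 x n : 0 <= x <= 1 -> x ^ n <= 1.
Proof. intros H. induction n; simpl. lra. assert (0 <= x ^ n) by (apply pow_le; lra). nra. Qed.

Lemma pow_dec x m n : 0 <= x <= 1 -> (m <= n)%nat -> x ^ n <= x ^ m.
Proof.
  intros H Hmn. replace n with (m + (n - m))%nat by lia. rewrite pow_add.
  assert (0 <= x ^ m) by (apply pow_le; lra). pose proof (pow_le1 x (n - m) H).
  assert (0 <= x ^ (n - m)) by (apply pow_le; lra). nra.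
Qed.

Lemma fact_ge r : INR r <= INR (fact r).
Proof.
  apply le_INR. induction r. simpl; lia. simpl. pose proof (lt_O_fact r). nia.
Qed.

Lemma one_plus_pow r : (1 <= r)%nat -> (1 + / INR r) ^ r <= exp 1.
Proof.
  intros Hr. assert (0 < INR r) by (apply lt_0_INR; lia).
  apply Rle_trans with (exp (/ INR r) ^ r).
  - apply pow_incr. split. assert (0 < / INR r) by (apply Rinv_0_lt_compat; lra). lra. apply exp_ineq1_le.
  - rewrite exp_pow_n. right. f_equal. field. lra.
Qed.

Lemma fact_lower r : (INR r / exp 1) ^ r <= INR (fact r).
Proof.
  pose proof exp_le_3 as He3. assert (He1 : 1 < exp 1) by (pose proof (exp_ineq1 1 ltac:(lra)); lra).
  induction r.
  - simpl. lra.
  - destruct r.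
    + assert (/ exp 1 < 1) by (apply (Rmult_lt_reg_r (exp 1)); [lra|rewrite Rinv_l by lra; lra]).
      simpl. unfold Rdiv. lra.
    + set (n := S r) in *. assert (Hn : 0 < INR n) by (apply lt_0_INR; unfold n; lia).
      assert (E : (INR (S n) / exp 1) ^ S n = INR (S n) / exp 1 * ((INR n / exp 1) ^ n * (1 + / INR n) ^ n)).
      { change ((INR (S n) / exp 1) ^ S n) with (INR (S n) / exp 1 * (INR (S n) / exp 1) ^ n).
        rewrite <- Rpow_mult_distr.
        assert (E0 : INR n / exp 1 * (1 + / INR n) = INR (S n) / exp 1) by (rewrite S_INR; field; split; lra).
        rewrite E0. reflexivity. }
      rewrite E. rewrite fact_simpl, mult_INR.
      assert (H1 := one_plus_pow n ltac:(unfold n; lia)).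
      assert (H0 : 0 <= (INR n / exp 1) ^ n) by (apply pow_le; apply Rmult_le_pos; [lra|left; apply Rinv_0_lt_compat; lra]).
      assert (H2 : (INR n / exp 1) ^ n * (1 + / INR n) ^ n <= INR (fact n) * exp 1).
      { apply Rmult_le_compat; auto. apply pow_le. assert (0 < / INR n) by (apply Rinv_0_lt_compat; lra). lra. }
      assert (HS : 0 < INR (S n)) by (apply lt_0_INR; lia).
      apply Rle_trans with (INR (S n) / exp 1 * (INR (fact n) * exp 1)).
      * apply Rmult_le_compat_l; auto. apply Rmult_le_pos; [lra|left; apply Rinv_0_lt_compat; lra].
      * right. field. lra.
Qed.

Lemma comb_ineq (X mu : R) (r k : nat) : (1 <= k)%nat -> (k <= r)%nat -> 0 <= mu -> X <= 1 ->
  X <= mu ^ r / INR (fact r) -> X <= exp 1 ^ k * mu ^ k / INR r.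
Proof.
  intros Hk Hkr Hmu HX1 HX2.
  pose proof exp_le_3 as He3. assert (He1 : 1 < exp 1) by (pose proof (exp_ineq1 1 ltac:(lra)); lra).
  assert (Hr : 0 < INR r) by (apply lt_0_INR; lia).
  assert (Hr1 : 1 <= INR r) by (apply (le_INR 1); lia).
  assert (Hek : 1 <= exp 1 ^ k) by (apply pow_R1_Rle; lra).
  assert (Hf : 0 < INR (fact r)) by apply INR_fact_lt_0.
  destruct (Rle_dec mu 1) as [Hm1|Hm1].
  - eapply Rle_trans; [exact HX2|]. unfold Rdiv.
    assert (mu ^ r <= mu ^ k) by (apply pow_dec; auto; lra).
    assert (0 <= mu ^ r) by (apply pow_le; auto).
    assert (/ INR (fact r) <= / INR r) by (apply Rinv_le_contravar; auto; apply fact_ge).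
    assert (0 <= mu ^ k) by (apply pow_le; auto).
    apply Rle_trans with (mu ^ k * / INR r). apply Rmult_le_compat; auto. left; apply Rinv_0_lt_compat; auto.
    assert (0 < / INR r) by (apply Rinv_0_lt_compat; auto). assert (0 <= mu ^ k * / INR r) by (apply Rmult_le_pos; lra).
    assert (0 <= (exp 1 ^ k - 1) * (mu ^ k * / INR r)) by (apply Rmult_le_pos; lra). nra.
  - rewrite <- Rpow_mult_distr. set (y := exp 1 * mu). assert (Hy : 1 <= y) by (unfold y; nra).
    destruct (Rle_dec (INR r) y) as [Hry|Hry].
    + eapply Rle_trans; [exact HX1|]. assert (y <= y ^ k).
      { rewrite <- (pow_1 y) at 1. apply Rle_pow; auto. }
      apply (Rmult_le_reg_r (INR r)); auto. unfold Rdiv. rewrite Rmult_assoc, Rinv_l, Rmult_1_r by lra. lra.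
    + apply Rnot_le_lt in Hry.
      assert (Hfl := fact_lower r).
      assert (Hpos : 0 < (INR r / exp 1) ^ r) by (apply pow_lt; apply Rdiv_lt_0_compat; lra).
      assert (H1 : mu ^ r / INR (fact r) <= mu ^ r / (INR r / exp 1) ^ r).
      { unfold Rdiv. apply Rmult_le_compat_l. apply pow_le; auto. apply Rinv_le_contravar; auto. }
      assert (E : mu ^ r / (INR r / exp 1) ^ r = (y / INR r) ^ r).
      { unfold y, Rdiv. rewrite !Rpow_mult_distr, !pow_inv. field. split; apply pow_nonzero; lra. }
      assert (Hz : 0 <= y / INR r <= 1).
      { split. apply Rmult_le_pos; [lra|left; apply Rinv_0_lt_compat; lra]. apply (Rmult_le_reg_r (INR r)); auto. unfold Rdiv. rewrite Rmult_assoc, Rinv_l by lra. lra. }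
      assert (H2 : (y / INR r) ^ r <= (y / INR r) ^ k) by (apply pow_dec; auto).
      assert (E2 : (y / INR r) ^ k = y ^ k / INR r ^ k) by (unfold Rdiv; rewrite Rpow_mult_distr, pow_inv; reflexivity).
      assert (H3 : INR r <= INR r ^ k) by (rewrite <- (pow_1 (INR r)) at 1; apply Rle_pow; auto).
      assert (H4 : y ^ k / INR r ^ k <= y ^ k / INR r).
      { unfold Rdiv. apply Rmult_le_compat_l. apply pow_le; lra. apply Rinv_le_contravar; auto. }
      lra.
Qed.

Lemma Rdiv_le_0' a b : 0 <= a -> 0 < b -> 0 <= a / b.
Proof. intros. apply Rmult_le_pos; auto. left; apply Rinv_0_lt_compat; auto. Qed.

Lemma meas_exists_lt Ps (A : nat -> Omega Ps -> Prop) M : (forall m, meas Ps (A m)) ->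
  meas Ps (fun w => exists m, (m < M)%nat /\ A m w).
Proof.
  intros HA. induction M.
  - eapply meas_ext; [|apply meas_empty]. intro w; split; [tauto|intros [m [Hm _]]; lia].
  - eapply meas_ext; [|apply (meas_or Ps _ _ IHM (HA M))]. intro w; split.
    + intros [[m [Hm H]]|H]. exists m; split; auto. exists M; auto.
    + intros [m [Hm H]]. destruct (Nat.eq_dec m M). subst; right; auto. left; exists m; split; auto; lia.
Qed.

Lemma union_bound Ps (A : nat -> Omega Ps -> Prop) M : (forall m, meas Ps (A m)) ->
  Pr Ps (fun w => exists m, (m < M)%nat /\ A m w) <= sumN (fun m => Pr Ps (A m)) M.
Proof.
  intros HA. induction M.
  - simpl. rewrite (Pr_ext Ps _ (fun _ => False)). rewrite Pr_empty; lra.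
    intro w; split; [intros [m [Hm _]]; lia|tauto].
  - simpl sumN. rewrite (Pr_ext Ps _ (fun w => (exists m, (m < M)%nat /\ A m w) \/ A M w)).
    + eapply Rle_trans; [apply Pr_sub; auto; apply meas_exists_lt; auto|]. lra.
    + intro w; split.
      * intros [m [Hm H]]. destruct (Nat.eq_dec m M). subst; right; auto. left; exists m; split; auto; lia.
      * intros [[m [Hm H]]|H]. exists m; split; auto. exists M; auto.
Qed.

Lemma prod_const_seq (c : R) s i : prodR (map (fun _ => c) (seq s i)) = c ^ i.
Proof. revert s; induction i; intros s; simpl; auto. unfold prodR in *; simpl. rewrite IHi; auto. Qed.

Theorem corollary3p9
  (Ps : ProbSpace) (sigma : nat -> Omega Ps -> R)
  (g kf : R -> R) (k : nat) (ell delta : nat -> R) :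
  (* (sigma_i)_{i in nat} i.i.d. copies of sigma_0 *)
  iid Ps sigma ->
  (* sigma_0 strictly positive *)
  Pr Ps (fun w => sigma 0%nat w <= 0) = 0 ->
  (* L is a well-defined real function: P(sigma_0 > u) > 0 for all u *)
  (forall u, 0 < Pr Ps (fun w => sigma 0%nat w > u)) ->
  (* L is slowly varying *)
  (forall v, 0 < v ->
     lim_infty (fun u => Ltail Ps (sigma 0%nat) (u * v) / Ltail Ps (sigma 0%nat) u) 1) ->
  (* Assumption A *)
  AssumptionA (Ltail Ps (sigma 0%nat)) g kf ->
  (1 <= k)%nat ->
  (forall i, 0 < ell i) ->
  (forall i, 0 < delta i) ->
  seq_to_infty ell ->
  exists c, 0 < c /\
    exists N, forall i, (N <= i)%nat ->
      Pr Ps (fun w => S_ord sigma i k w > ell i * delta i /\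
                      (forall j, (1 <= j <= i)%nat -> sigma j w <= ell i))
      / Pr Ps (fun w => forall j, (1 <= j <= i)%nat -> sigma j w <= ell i)
      < c / delta i
        * (INR i / Ltail Ps (sigma 0%nat) (ell i) * g (ell i)) ^ k.
Proof.
  intros Hiid _ HFpos Hsv HAs Hk Hell Hdelta Hinf.
  pose proof Hiid as [Hrv [Hlaw Hind]].
  set (F := fun u => Pr Ps (fun w => sigma 0%nat w > u)).
  assert (HF : forall u, 0 < F u) by (intro; apply HFpos).
  assert (HF1 : forall u, F u <= 1) by (intro; apply Pr_le1, mf_gt, Hrv).
  assert (Hmon : forall x y, x <= y -> F y <= F x).
  { intros x y H. apply Pr_mono; try apply mf_gt, Hrv. intros w Hw; lra. }
  assert (Hto0 : forall eps, 0 < eps -> exists U, forall u, U <= u -> F u < eps) by (apply tail_to_0, Hrv).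
  assert (HGF : forall x, Gd Ps sigma x = 1 - F x).
  { intro x. unfold F. rewrite (Pr_ext Ps (fun w => sigma 0%nat w > x) (fun w => ~ sigma 0%nat w <= x)) by (intro; lra).
    rewrite Pr_compl by apply Hrv. unfold Gd; ring. }
  destruct (analysis_main F g kf k HF HF1 Hmon Hto0 Hsv HAs Hk) as [K [l0 [HK Hl0]]].
  set (e := exp 1). assert (He : 0 < e) by apply exp_pos.
  assert (Hek : 0 < e ^ k) by (apply pow_lt; auto).
  exists (16 * e ^ k * 2 ^ k * K). split.
  { assert (0 < 2 ^ k) by (apply pow_lt; lra). apply Rmult_lt_0_compat; [apply Rmult_lt_0_compat; [|auto]|auto]. lra. }
  destruct (Hinf l0) as [N0 HN0].
  exists (max N0 1). intros i Hi.
  assert (Hi1 : (1 <= i)%nat) by lia.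
  set (l := ell i). set (d := delta i).
  assert (Hl : l0 <= l) by (apply HN0; lia).
  destruct (Hl0 l Hl) as [Hgl [HFl Hsum]].
  assert (Hlpos : 0 < l) by apply Hell. assert (Hd : 0 < d) by apply Hdelta.
  set (q := Gd Ps sigma l). assert (Hq : q = 1 - F l) by apply HGF.
  assert (Hq2 : / 2 <= q) by lra.
  assert (HD : Pr Ps (fun w => forall j, (1 <= j <= i)%nat -> sigma j w <= l) = q ^ i).
  { rewrite (Pr_ext Ps _ (fun w => Forall (fun j => sigma j w <= (fun _ => l) j) (seq 1 i))).
    - rewrite Hind by apply seq_NoDup. rewrite <- (prod_const_seq q 1 i). unfold prodR. f_equal.
      apply map_ext. intro j. rewrite Hlaw. reflexivity.
    - intro w. rewrite Forall_forall. split; intros H j Hj; apply H; apply in_seq in Hj || apply in_seq; lia. }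
  assert (Hqi : 0 < q ^ i) by (apply pow_lt; lra).
  rewrite HD. fold l d.
  destruct (INR_unbounded (2 * INR i / d)) as [M HM].
  assert (HMi : INR i * (l / 2 ^ M) <= d * l / 2).
  { pose proof (INR_le_pow2 M). assert (H2M : 0 < 2 ^ M) by (apply pow_lt; lra).
    assert (2 * INR i < d * 2 ^ M).
    { apply (Rmult_lt_compat_r d) in HM; auto. unfold Rdiv in HM. rewrite Rmult_assoc, Rinv_l, Rmult_1_r in HM by lra. nra. }
    unfold Rdiv. apply (Rmult_le_reg_r (2 * 2 ^ M)). lra.
    replace (INR i * (l * / 2 ^ M) * (2 * 2 ^ M)) with (2 * INR i * l) by (field; lra).
    replace (d * l * / 2 * (2 * 2 ^ M)) with (d * 2 ^ M * l) by field. nra. }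
  set (b := 7 / 4).
  set (nm := fun m : nat => Z.to_nat (up (d * b ^ m / 8) - 1)).
  assert (Hnm : forall m, INR (nm m) <= d * b ^ m / 8 /\ d * b ^ m / 8 < INR (nm m) + 1).
  { intro m. assert (0 < d * b ^ m / 8) by (apply Rdiv_lt_0_compat; [apply Rmult_lt_0_compat; [auto|apply pow_lt; unfold b; lra]|lra]).
    destruct (archimed (d * b ^ m / 8)) as [A1 A2].
    assert (Hz : (1 <= up (d * b ^ m / 8))%Z) by (assert (0 < IZR (up (d * b ^ m / 8))) by lra; apply lt_IZR in H0; lia).
    unfold nm. rewrite INR_IZR_INZ, Z2Nat.id by lia. rewrite minus_IZR. simpl. lra. }
  set (rm := fun m => (k + nm m)%nat).
  set (am := fun m : nat => l / 2 ^ (S m)).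
  set (Cm := fun m => EvC sigma (am m) l (seq 1 i) (rm m) nil).
  set (E := fun w => S_ord sigma i k w > l * d /\ (forall j, (1 <= j <= i)%nat -> sigma j w <= l)).
  assert (HmC : forall m, meas Ps (Cm m)).
  { intro m. destruct (count_bound Ps sigma (am m) l Hiid) with (js := seq 1 i) (r := rm m) (bs := @nil (nat * option R * R)) as [Hm _].
    unfold am; unfold Rdiv; rewrite <- (Rmult_1_r l) at 2; apply Rmult_le_compat_l; [lra|]; rewrite <- Rinv_1;
      apply Rinv_le_contravar; [lra| apply pow_R1_Rle; lra].
    fold q; lra. constructor. apply seq_NoDup. exact Hm. }
  assert (HDm : meas Ps (fun w => forall j, (1 <= j <= i)%nat -> sigma j w <= l)).
  { eapply meas_ext; [|apply (meas_Forall Ps (fun j w => sigma j w <= l) (seq 1 i))].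
    intro w. rewrite Forall_forall. split; intros H j Hj; apply H; apply in_seq in Hj || apply in_seq; lia.
    intros; apply Hrv. }
  assert (HEm : meas Ps E) by (apply meas_and; auto; apply mf_gt, S_ord_mf; auto).
  assert (Hincl : forall w, E w -> exists m, (m < M)%nat /\ Cm m w).
  { intros w [HS HDw]. apply NNPP; intro Hno.
    set (vals := map (fun j => sigma j w) (seq 1 i)).
    assert (HFv : Forall (fun x => x <= l) vals).
    { apply Forall_forall. intros x Hx. unfold vals in Hx. apply in_map_iff in Hx. destruct Hx as [j [<- Hj]].
      apply in_seq in Hj. apply HDw; lia. }
    assert (HFs : Forall (fun j => sigma j w <= l) (seq 1 i)).
    { apply Forall_forall. intros j Hj. apply in_seq in Hj. apply HDw; lia. }
    assert (Hc : forall m, (m < M)%nat -> (cnt (l / 2 ^ (S m)) vals <= k - 1 + nm m)%nat).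
    { intros m Hm. destruct (le_lt_dec (rm m) (cnt (l / 2 ^ (S m)) vals)) as [Hle|Hlt].
      - exfalso. apply Hno. exists m. split; auto. unfold Cm, EvC. split; [exact Hle|]. split; auto. constructor.
      - unfold rm in Hlt. lia. }
    pose proof (det_bound vals l k M nm Hlpos HFv Hc) as Hdet.
    assert (HSe : S_ord sigma i k w = lsum (skipn (k - 1) (sort_desc vals))) by reflexivity.
    assert (Hlen : length vals = i) by (unfold vals; rewrite length_map, length_seq; reflexivity).
    rewrite Hlen in Hdet.
    assert (Hsb : sumN (fun m => l / 2 ^ S m * INR (nm m)) M <= l * d / 2).
    { apply Rle_trans with (sumN (fun m => l * d / 16 * (7 / 8) ^ m) M).
      - apply sumN_le. intros m _. destruct (Hnm m) as [H1 _].
        assert (H2 : 0 < 2 ^ m) by (apply pow_lt; lra).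
        assert (E78 : (7 / 8) ^ m = b ^ m / 2 ^ m) by (unfold b, Rdiv; rewrite <- pow_inv, <- Rpow_mult_distr; f_equal; field).
        rewrite E78. apply Rle_trans with (l / 2 ^ S m * (d * b ^ m / 8)).
        + apply Rmult_le_compat_l; auto. apply Rdiv_le_0'; [lra|apply pow_lt; lra].
        + right. simpl. field. lra.
      - rewrite sumN_scal. assert (Hg := geom_sum (7 / 8) M ltac:(lra)).
        replace (/ (1 - 7 / 8)) with 8 in Hg by field.
        assert (0 <= l * d / 16) by (apply Rdiv_le_0'; [apply Rmult_le_pos|]; lra). apply Rle_trans with (l * d / 16 * 8); [apply Rmult_le_compat_l; auto|right; field]. }
    lra. }
  assert (HPE : Pr Ps E <= sumN (fun m => Pr Ps (Cm m)) M).
  { eapply Rle_trans; [|apply union_bound; auto]. apply Pr_mono; auto. apply meas_exists_lt; auto. }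
  set (W := 8 * e ^ k * (2 * INR i * F l) ^ k / d).
  assert (HW : 0 <= W).
  { unfold W. apply Rdiv_le_0'; auto. apply Rmult_le_pos; [apply Rmult_le_pos; lra|]. apply pow_le.
    assert (0 <= INR i) by apply pos_INR. pose proof (HF l). nra. }
  assert (Hbox : Pr Ps (boxP sigma nil) = 1).
  { rewrite <- (Pr_full Ps). apply Pr_ext. intro; split; auto. intros; constructor. }
  assert (Hterm : forall m, Pr Ps (Cm m) / q ^ i <= W * ((F (l / 2 ^ S m) / F l - 1) ^ k / (7 / 4) ^ m)).
  { intro m.
    assert (Hal : am m <= l).
    { unfold am; unfold Rdiv; rewrite <- (Rmult_1_r l) at 2; apply Rmult_le_compat_l; [lra|]; rewrite <- Rinv_1;
      apply Rinv_le_contravar; [lra| apply pow_R1_Rle; lra]. }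
    destruct (count_bound Ps sigma (am m) l Hiid Hal ltac:(fold q; lra) (seq 1 i) (rm m) nil) as [_ Hcb].
    constructor. apply seq_NoDup.
    rewrite length_seq, Hbox, Rmult_1_r in Hcb. fold q in Hcb. fold (Cm m) in Hcb.
    set (p := q - Gd Ps sigma (am m)) in *.
    assert (Hpeq : p = F l * (F (am m) / F l - 1)) by (unfold p, q; rewrite !HGF; field; apply Rgt_not_eq, HF).
    assert (Hh0 : 0 <= F (am m) / F l - 1).
    { pose proof (Hmon _ _ Hal). pose proof (HF l). apply (Rmult_le_reg_r (F l)); auto. rewrite Rmult_0_l.
      unfold Rdiv. rewrite Rmult_minus_distr_r, Rmult_assoc, Rinv_l by lra. lra. }
    assert (Hp0 : 0 <= p) by (rewrite Hpeq; apply Rmult_le_pos; [left; apply HF|auto]).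
    set (mu := INR i * (p / q)).
    assert (Hmu0 : 0 <= mu) by (unfold mu; apply Rmult_le_pos; [apply pos_INR|apply Rdiv_le_0'; lra]).
    set (X := Pr Ps (Cm m) / q ^ i).
    assert (HX1 : X <= 1).
    { unfold X. apply (Rmult_le_reg_r (q ^ i)); auto. unfold Rdiv. rewrite Rmult_assoc, Rinv_l, Rmult_1_l, Rmult_1_r by lra.
      rewrite <- HD. apply Pr_mono; auto. intros w [_ [Hw _]]. intros j Hj. rewrite Forall_forall in Hw. apply Hw, in_seq; lia. }
    assert (HX2 : X <= mu ^ (rm m) / INR (fact (rm m))).
    { unfold X, mu. apply (Rmult_le_reg_r (q ^ i)); auto. unfold Rdiv at 1. rewrite Rmult_assoc, Rinv_l, Rmult_1_r by lra.
      eapply Rle_trans; [exact Hcb|]. right. rewrite Rpow_mult_distr. field. apply Rgt_not_eq, INR_fact_lt_0. }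
    assert (Hkr : (k <= rm m)%nat) by (unfold rm; lia).
    pose proof (comb_ineq X mu (rm m) k Hk Hkr Hmu0 HX1 HX2) as Hci. fold e in Hci.
    assert (Hmu : mu <= 2 * INR i * F l * (F (am m) / F l - 1)).
    { unfold mu. rewrite Hpeq. assert (0 <= INR i) by apply pos_INR.
      assert (0 <= INR i * (F l * (F (am m) / F l - 1))) by (apply Rmult_le_pos; auto; apply Rmult_le_pos; auto; left; apply HF).
      apply Rle_trans with (INR i * (F l * (F (am m) / F l - 1)) * / q). right; unfold Rdiv; ring.
      apply Rle_trans with (INR i * (F l * (F (am m) / F l - 1)) * 2). apply Rmult_le_compat_l; auto.
      apply (Rmult_le_reg_r q); [lra|]. rewrite Rinv_l by lra. lra. right; ring. }
    assert (Hmuk : mu ^ k <= (2 * INR i * F l) ^ k * (F (am m) / F l - 1) ^ k).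
    { rewrite <- Rpow_mult_distr. apply pow_incr. split; auto. }
    destruct (Hnm m) as [_ Hn2].
    assert (Hbm : 0 < b ^ m) by (apply pow_lt; unfold b; lra).
    assert (Hr : d * b ^ m / 8 < INR (rm m)).
    { unfold rm. rewrite plus_INR. assert (1 <= INR k) by (apply (le_INR 1); auto). lra. }
    assert (Hr0 : 0 < d * b ^ m / 8) by (apply Rdiv_lt_0_compat; [apply Rmult_lt_0_compat|]; lra).
    assert (Hinvr : / INR (rm m) <= 8 / (d * b ^ m)).
    { replace (8 / (d * b ^ m)) with (/ (d * b ^ m / 8)) by (field; lra). apply Rinv_le_contravar; lra. }
    fold X. eapply Rle_trans; [exact Hci|]. unfold Rdiv at 1.
    assert (0 <= mu ^ k) by (apply pow_le; auto).
    assert (0 <= (2 * INR i * F l) ^ k * (F (am m) / F l - 1) ^ k) by lra.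
    apply Rle_trans with (e ^ k * ((2 * INR i * F l) ^ k * (F (am m) / F l - 1) ^ k) * (8 / (d * b ^ m))).
    - rewrite Rmult_assoc, (Rmult_assoc (e ^ k)). apply Rmult_le_compat_l; [lra|].
      apply Rmult_le_compat; auto. left; apply Rinv_0_lt_compat, lt_0_INR; unfold rm; lia.
    - right. unfold W, am, b. field. repeat split; try lra; try (apply pow_nonzero; lra). }
  assert (HS : sumN (fun m => Pr Ps (Cm m) / q ^ i) M <= W * (K * g l ^ k)).
  { eapply Rle_trans; [apply sumN_le; intros m _; apply Hterm|]. rewrite sumN_scal.
    apply Rmult_le_compat_l; auto. }
  assert (HEq : Pr Ps E / q ^ i <= W * (K * g l ^ k)).
  { eapply Rle_trans; [|exact HS]. unfold Rdiv.
    replace (sumN (fun m => Pr Ps (Cm m) * / q ^ i) M) with (sumN (fun m => Pr Ps (Cm m)) M * / q ^ i).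
    apply Rmult_le_compat_r. left; apply Rinv_0_lt_compat; auto. auto.
    rewrite Rmult_comm, <- sumN_scal. f_equal. apply functional_extensionality; intro; ring. }
  change (Pr Ps E / q ^ i < 16 * e ^ k * 2 ^ k * K / d * (INR i / Ltail Ps (sigma 0%nat) l * g l) ^ k).
  change (Ltail Ps (sigma 0%nat) l) with (/ F l).
  assert (HFl0 : 0 < F l) by apply HF.
  assert (Hi0 : 0 < INR i) by (apply lt_0_INR; lia).
  replace (INR i / / F l * g l) with (INR i * F l * g l) by (field; lra).
  assert (EW : 16 * e ^ k * 2 ^ k * K / d * (INR i * F l * g l) ^ k = 2 * (W * (K * g l ^ k))).
  { unfold W. rewrite !Rpow_mult_distr. field. lra. }
  rewrite EW.
  assert (HWp : 0 < W * (K * g l ^ k)).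
  { unfold W. apply Rmult_lt_0_compat; [|apply Rmult_lt_0_compat; [auto|apply pow_lt; auto]].
    apply Rdiv_lt_0_compat; auto. apply Rmult_lt_0_compat; [lra|]. apply pow_lt.
    apply Rmult_lt_0_compat; [lra|auto]. }
  lra.
Qed.
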